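(* Let $\{D_1,D_2,D_3\}$ be a positively oriented orthonormal basis of $\mathbb{R}^3$ and $J$ a symmetric positive definite linear map on $\mathbb{R}^3$ having $D_3$ as an eigenvector. For a smooth curve $\Lambda:[0,T]\to SO(3)$ the following are equivalent: (i) (Lagrange–d'Alembert) $w\cdot d_3=0$ on $[0,T]$ and there is a continuous $\mu:[0,T]\to\mathbb{R}$ such that $$\frac{d}{d\iota}\Big|_{\iota=0}\int_0^T K(\Lambda_\iota,\dot\Lambda_\iota)\,dt+\int_0^T\mu\,\delta\theta\cdot d_3\,dt=0$$ for every smooth $\delta\theta:[0,T]\to\mathbb{R}^3$ with $\delta\theta(0)=\delta\theta(T)=0$, where $\Lambda_\iota=\exp[\iota\widehat{\delta\theta}]\Lambda$; (ii) there is $\mu:[0,T]\to\mathbb{R}$ such that for all $t$ $$\nabla_{\dot d_3}\pi_\perp+\pi_\parallel\dot d_3=0,\qquad \dot\pi_\parallel+\pi_\perp\cdot\dot d_3+\mu=0,\qquad w\cdot d_3=0 .$$ Moreover, for any $\Lambda$ and $\mu$, the system in (ii) is equivalent to $$\nabla_{\dot d_3}\pi_\perp=0,\qquad \pi_\perp\cdot\dot d_3+\mu=0,\qquad w_\parallel=0,$$ i.e. $\pi_\perp$ is parallel transported along the curve $d_3$ on the unit sphere.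
   Context: Notation: $d_i=\Lambda D_i$; for $v\in\mathbb{R}^3$, $\hat v a=v\times a$; the spatial angular velocity $w$ and convected angular velocity $W$ are defined by $\dot\Lambda=\hat w\Lambda=\Lambda\hat W$, and $w_\parallel=w\cdot d_3$. The kinetic energy is $K=\tfrac12 W\cdot JW=\tfrac12 w\cdot jw$ with $j=\Lambda J\Lambda^T$. The spatial angular momentum is $\pi=jw$, split as $\pi=\pi_\perp+\pi_\parallel d_3$ with $\pi_\parallel=\pi\cdot d_3$, $\pi_\perp=(I-d_3\otimes d_3)\pi$. For a curve $v(t)$ with $v(t)\cdot d_3(t)=0$, $\nabla_{\dot d_3}v:=(I-d_3\otimes d_3)\dot v$ is the covariant derivative on the unit sphere along $d_3$. The constraint $w\cdot d_3=0$ is the non-twisting condition and $\mu$ the associated multiplier. *)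

(* Defs.v *)
From Stdlib Require Import Reals.
From Coquelicot Require Import Coquelicot.
Open Scope R_scope.

Record V3 := mkV3 { vx : R; vy : R; vz : R }.

Definition vzero : V3 := mkV3 0 0 0.
Definition vadd (a b : V3) : V3 := mkV3 (vx a + vx b) (vy a + vy b) (vz a + vz b).
Definition vsub (a b : V3) : V3 := mkV3 (vx a - vx b) (vy a - vy b) (vz a - vz b).
Definition vscale (c : R) (a : V3) : V3 := mkV3 (c * vx a) (c * vy a) (c * vz a).
Definition dot (a b : V3) : R := vx a * vx b + vy a * vy b + vz a * vz b.
Definition cross (a b : V3) : V3 :=
  mkV3 (vy a * vz b - vz a * vy b) (vz a * vx b - vx a * vz b) (vx a * vy b - vy a * vx b).

Definition vent (v : V3) (i : nat) : R :=
  match i with 0%nat => vx v | 1%nat => vy v | _ => vz v end.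
Definition vmk (f : nat -> R) : V3 := mkV3 (f 0%nat) (f 1%nat) (f 2%nat).

Record M3 := mkM3 { row1 : V3; row2 : V3; row3 : V3 }.

Definition ent (A : M3) (i j : nat) : R :=
  match i with 0%nat => vent (row1 A) j | 1%nat => vent (row2 A) j | _ => vent (row3 A) j end.
Definition mmk (f : nat -> nat -> R) : M3 :=
  mkM3 (vmk (f 0%nat)) (vmk (f 1%nat)) (vmk (f 2%nat)).

Definition mI : M3 := mmk (fun i j => if Nat.eqb i j then 1 else 0).
Definition mtr (A : M3) : M3 := mmk (fun i j => ent A j i).
Definition mmul (A B : M3) : M3 :=
  mmk (fun i j => ent A i 0 * ent B 0 j + ent A i 1 * ent B 1 j + ent A i 2 * ent B 2 j).
Definition mscale (c : R) (A : M3) : M3 := mmk (fun i j => c * ent A i j).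
Definition mapp (A : M3) (v : V3) : V3 := mkV3 (dot (row1 A) v) (dot (row2 A) v) (dot (row3 A) v).
Definition mcols (a b c : V3) : M3 := mtr (mkM3 a b c).
Definition mdet (A : M3) : R := dot (row1 A) (cross (row2 A) (row3 A)).
Fixpoint mpow (A : M3) (n : nat) : M3 :=
  match n with 0%nat => mI | S n => mmul A (mpow A n) end.

Definition mexp (A : M3) : M3 :=
  mmk (fun i j => Series (fun k => ent (mpow A k) i j / INR (Factorial.fact k))).

(** hat map (v x .) and its inverse vee on skew matrices *)
Definition hat (v : V3) : M3 :=
  mkM3 (mkV3 0 (- vz v) (vy v)) (mkV3 (vz v) 0 (- vx v)) (mkV3 (- vy v) (vx v) 0).
Definition vee (A : M3) : V3 := mkV3 (ent A 2 1) (ent A 0 2) (ent A 1 0).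

Definition in_SO3 (A : M3) : Prop := mmul (mtr A) A = mI /\ mdet A = 1.

Definition mderiv (L : R -> M3) (t : R) : M3 := mmk (fun i j => Derive (fun s => ent (L s) i j) t).
Definition vderiv (v : R -> V3) (t : R) : V3 := vmk (fun i => Derive (fun s => vent (v s) i) t).

Definition smooth_fun (f : R -> R) : Prop := forall (n : nat) (x : R), ex_derive_n f n x.
Definition smooth_M (L : R -> M3) : Prop :=
  forall i j, (i < 3)%nat -> (j < 3)%nat -> smooth_fun (fun t => ent (L t) i j).
Definition smooth_V (v : R -> V3) : Prop :=
  forall i, (i < 3)%nat -> smooth_fun (fun t => vent (v t) i).

Definition cont_on (a b : R) (f : R -> R) : Prop :=
  forall t, a <= t <= b -> forall eps, 0 < eps -> exists delta, 0 < delta /\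
    forall s, a <= s <= b -> Rabs (s - t) < delta -> Rabs (f s - f t) < eps.

Section Kin.
Variables (J : M3) (D3 : V3) (L : R -> M3).

Definition d3 (t : R) : V3 := mapp (L t) D3.
Definition w_sp (t : R) : V3 := vee (mmul (mderiv L t) (mtr (L t))).
Definition w_par (t : R) : R := dot (w_sp t) (d3 t).
Definition jmat (t : R) : M3 := mmul (L t) (mmul J (mtr (L t))).
Definition pi_sp (t : R) : V3 := mapp (jmat t) (w_sp t).
Definition pi_par (t : R) : R := dot (pi_sp t) (d3 t).
Definition pi_perp (t : R) : V3 := vsub (pi_sp t) (vscale (pi_par t) (d3 t)).
(** covariant derivative along d3 on the unit sphere *)
Definition cov_d3 (v : R -> V3) (t : R) : V3 :=
  vsub (vderiv v t) (vscale (dot (d3 t) (vderiv v t)) (d3 t)).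
End Kin.

Definition kinetic (J : M3) (L Ld : M3) : R :=
  let W := vee (mmul (mtr L) Ld) in / 2 * dot W (mapp J W).

Definition Lvar (L : R -> M3) (dth : R -> V3) (iota : R) (t : R) : M3 :=
  mmul (mexp (mscale iota (hat (dth t)))) (L t).

Definition action_var (J : M3) (T : R) (L : R -> M3) (dth : R -> V3) (iota : R) : R :=
  RInt (fun t => kinetic J (Lvar L dth iota t) (mderiv (Lvar L dth iota) t)) 0 T.

Definition sys_ii (J : M3) (D3 : V3) (L : R -> M3) (mu : R -> R) (t : R) : Prop :=
  vadd (cov_d3 D3 L (pi_perp J D3 L) t) (vscale (pi_par J D3 L t) (vderiv (d3 D3 L) t)) = vzero /\
  Derive (pi_par J D3 L) t + dot (pi_perp J D3 L t) (vderiv (d3 D3 L) t) + mu t = 0 /\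
  dot (w_sp L t) (d3 D3 L t) = 0.

Definition sys_pt (J : M3) (D3 : V3) (L : R -> M3) (mu : R -> R) (t : R) : Prop :=
  cov_d3 D3 L (pi_perp J D3 L) t = vzero /\
  dot (pi_perp J D3 L t) (vderiv (d3 D3 L) t) + mu t = 0 /\
  w_par D3 L t = 0.

(* Main.v *)
Require Import Defs.
From Stdlib Require Import Reals Lra Lia Psatz.
From Coquelicot Require Import Coquelicot.
Open Scope R_scope.

Fixpoint Cn (n : nat) (f : R -> R) : Prop :=
  match n with O => True | S n => (forall x, ex_derive f x) /\ Cn n (Derive f) end.
Definition Sm (f : R -> R) : Prop := forall n, Cn n f.

Lemma Cn_ext : forall n f g, (forall x, f x = g x) -> Cn n f -> Cn n g.
Proof.
  induction n; simpl; auto. intros f g H [H1 H2]. split.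
  - intros x. apply ex_derive_ext with f; auto.
  - apply IHn with (Derive f); auto. intros x; apply Derive_ext; auto.
Qed.

Lemma Cn_S : forall n f, Cn (S n) f -> Cn n f.
Proof.
  induction n; simpl; auto. intros f [H1 H2]. split; auto.
Qed.

Lemma Cn_plus : forall n f g, Cn n f -> Cn n g -> Cn n (fun x => f x + g x).
Proof.
  induction n; simpl; auto. intros f g [F1 F2] [G1 G2]. split.
  - intros x; apply (ex_derive_plus f g); auto.
  - apply Cn_ext with (fun x => Derive f x + Derive g x).
    + intros x. symmetry. apply (Derive_plus f g); auto.
    + apply IHn; auto.
Qed.

Lemma Cn_mult : forall n f g, Cn n f -> Cn n g -> Cn n (fun x => f x * g x).
Proof.
  induction n; simpl; auto. intros f g HF HG.
  pose proof (Cn_S _ _ HF) as HF'. pose proof (Cn_S _ _ HG) as HG'.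
  destruct HF as [F1 F2]; destruct HG as [G1 G2]. split.
  - intros x; apply ex_derive_mult; auto.
  - apply Cn_ext with (fun x => Derive f x * g x + f x * Derive g x).
    + intros x. symmetry. apply Derive_mult; auto.
    + apply Cn_plus; apply IHn; auto.
Qed.

Lemma Cn_const : forall n c, Cn n (fun _ => c).
Proof.
  induction n; simpl; auto. intros c; split.
  - intros; apply ex_derive_const.
  - apply Cn_ext with (fun _ => 0). intros; rewrite Derive_const; auto. apply IHn.
Qed.

Lemma Cn_id : forall n, Cn n (fun x => x).
Proof.
  destruct n; simpl; auto. split.
  - intros; apply ex_derive_id.
  - apply Cn_ext with (fun _ => 1). intros; rewrite Derive_id; auto. apply Cn_const.
Qed.

Lemma Sm_Derive : forall f, Sm f -> Sm (Derive f).
Proof. intros f H n. destruct (H (S n)) as [_ H2]. auto. Qed.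

Lemma Sm_ex_derive : forall f x, Sm f -> ex_derive f x.
Proof. intros f x H. destruct (H 1%nat) as [H1 _]. auto. Qed.

Lemma Cn_comp : forall n s g, Sm s -> Cn n g -> Cn n (fun x => s (g x)).
Proof.
  induction n; simpl; auto. intros s g Hs HG.
  pose proof (Cn_S _ _ HG) as HG'. destruct HG as [G1 G2]. split.
  - intros x. apply ex_derive_comp; auto. apply Sm_ex_derive; auto.
  - apply Cn_ext with (fun x => Derive s (g x) * Derive g x).
    + intros x. rewrite (Derive_comp s g); auto. ring. apply Sm_ex_derive; auto.
    + apply Cn_mult; auto. apply IHn; auto. apply Sm_Derive; auto.
Qed.

Lemma Sm_ext : forall f g, (forall x, f x = g x) -> Sm f -> Sm g.
Proof. intros f g H Hf n. apply Cn_ext with f; auto. Qed.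
Lemma Sm_plus : forall f g, Sm f -> Sm g -> Sm (fun x => f x + g x).
Proof. intros f g Hf Hg n; apply Cn_plus; auto. Qed.
Lemma Sm_mult : forall f g, Sm f -> Sm g -> Sm (fun x => f x * g x).
Proof. intros f g Hf Hg n; apply Cn_mult; auto. Qed.
Lemma Sm_const : forall c, Sm (fun _ => c).
Proof. intros c n; apply Cn_const. Qed.
Lemma Sm_id : Sm (fun x => x).
Proof. intros n; apply Cn_id. Qed.
Lemma Sm_comp : forall s g, Sm s -> Sm g -> Sm (fun x => s (g x)).
Proof. intros s g Hs Hg n; apply Cn_comp; auto. Qed.
Lemma Sm_opp : forall f, Sm f -> Sm (fun x => - f x).
Proof. intros f H. apply Sm_ext with (fun x => (-1) * f x). intros; ring.
  apply Sm_mult; auto; apply Sm_const. Qed.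
Lemma Sm_minus : forall f g, Sm f -> Sm g -> Sm (fun x => f x - g x).
Proof. intros f g Hf Hg. apply Sm_plus; auto. apply Sm_opp; auto. Qed.

Lemma Sm_continuous : forall f x, Sm f -> continuity_pt f x.
Proof. intros f x H. apply continuity_pt_filterlim.
  apply (ex_derive_continuous (K:=R_AbsRing) (V:=R_NormedModule)).
  apply Sm_ex_derive; auto. Qed.

Lemma Derive_n_S : forall f n x, Derive_n f (S n) x = Derive_n (Derive f) n x.
Proof. intros f n x. replace (S n) with (n+1)%nat by lia. rewrite <- (Derive_n_comp f n 1).
  reflexivity. Qed.

Lemma smooth_Sm : forall f, smooth_fun f -> Sm f.
Proof.
  intros f H n. revert f H. induction n; simpl; auto. intros f H. split.
  - intros x. apply (H 1%nat x).
  - apply IHn. intros k x. destruct k; simpl; auto.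
    apply ex_derive_ext with (Derive_n f (S k)).
    + intros t. apply Derive_n_S.
    + apply (H (S (S k)) x).
Qed.

Lemma Sm_smooth : forall f, Sm f -> smooth_fun f.
Proof.
  intros f H k x. destruct k; simpl; auto.
  revert f H. induction k; intros f H.
  - simpl. apply Sm_ex_derive; auto.
  - apply ex_derive_ext with (Derive_n (Derive f) k).
    + intros t. symmetry. apply Derive_n_S.
    + apply IHk. apply Sm_Derive; auto.
Qed.

Definition madd (A B : M3) : M3 := mmk (fun i j => ent A i j + ent B i j).
Definition mzero : M3 := mmk (fun _ _ => 0).
Definition madj (A : M3) : M3 := mtr (mkM3 (cross (row2 A) (row3 A)) (cross (row3 A) (row1 A)) (cross (row1 A) (row2 A))).

Ltac ij_cases i j := destruct i as [|[|[|i]]]; destruct j as [|[|[|j]]].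

Lemma M3_ext : forall A B : M3, (forall i j, (i < 3)%nat -> (j < 3)%nat -> ent A i j = ent B i j) -> A = B.
Proof.
  intros [[a1 a2 a3] [a4 a5 a6] [a7 a8 a9]] [[b1 b2 b3] [b4 b5 b6] [b7 b8 b9]] H.
  pose proof (H 0 0)%nat; pose proof (H 0 1)%nat; pose proof (H 0 2)%nat;
  pose proof (H 1 0)%nat; pose proof (H 1 1)%nat; pose proof (H 1 2)%nat;
  pose proof (H 2 0)%nat; pose proof (H 2 1)%nat; pose proof (H 2 2)%nat.
  cbn in *. f_equal; f_equal; auto with arith.
Qed.

Lemma V3_ext : forall a b : V3, (forall i, (i < 3)%nat -> vent a i = vent b i) -> a = b.
Proof.
  intros [a1 a2 a3] [b1 b2 b3] H.
  pose proof (H 0)%nat; pose proof (H 1)%nat; pose proof (H 2)%nat. cbn in *. f_equal; auto with arith.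
Qed.

Ltac mext := apply M3_ext; let i := fresh "i" in let j := fresh "j" in let Hi := fresh in let Hj := fresh in
  intros i j Hi Hj; ij_cases i j; try lia; cbn.
Ltac vext := apply V3_ext; let i := fresh "i" in let Hi := fresh in
  intros i Hi; destruct i as [|[|[|i]]]; try lia; cbn.

Lemma ent_mmul : forall A B i j, ent (mmul A B) i j = ent A i 0 * ent B 0 j + ent A i 1 * ent B 1 j + ent A i 2 * ent B 2 j.
Proof. intros; ij_cases i j; reflexivity. Qed.
Lemma ent_mtr : forall A i j, ent (mtr A) i j = ent A j i.
Proof. intros; ij_cases i j; reflexivity. Qed.
Lemma ent_madd : forall A B i j, ent (madd A B) i j = ent A i j + ent B i j.
Proof. intros; ij_cases i j; reflexivity. Qed.
Lemma ent_mscale : forall c A i j, ent (mscale c A) i j = c * ent A i j.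
Proof. intros; ij_cases i j; reflexivity. Qed.
Lemma ent_mzero : forall i j, ent mzero i j = 0.
Proof. intros; ij_cases i j; reflexivity. Qed.
Lemma ent_mderiv : forall L t i j, ent (mderiv L t) i j = Derive (fun s => ent (L s) i j) t.
Proof. intros; ij_cases i j; reflexivity. Qed.
Lemma vent_mapp : forall A v i, vent (mapp A v) i = ent A i 0 * vent v 0 + ent A i 1 * vent v 1 + ent A i 2 * vent v 2.
Proof. intros; destruct i as [|[|[|i]]]; reflexivity. Qed.
Lemma vent_vderiv : forall v t i, vent (vderiv v t) i = Derive (fun s => vent (v s) i) t.
Proof. intros; destruct i as [|[|[|i]]]; reflexivity. Qed.
Lemma dot_vent : forall a b, dot a b = vent a 0 * vent b 0 + vent a 1 * vent b 1 + vent a 2 * vent b 2.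
Proof. reflexivity. Qed.
Lemma vent_vee : forall A i, vent (vee A) i = match i with 0%nat => ent A 2 1 | 1%nat => ent A 0 2 | _ => ent A 1 0 end.
Proof. intros; destruct i as [|[|[|i]]]; reflexivity. Qed.
Lemma vent_vsub : forall a b i, vent (vsub a b) i = vent a i - vent b i.
Proof. intros; destruct i as [|[|[|i]]]; reflexivity. Qed.
Lemma vent_vadd : forall a b i, vent (vadd a b) i = vent a i + vent b i.
Proof. intros; destruct i as [|[|[|i]]]; reflexivity. Qed.
Lemma vent_vscale : forall c a i, vent (vscale c a) i = c * vent a i.
Proof. intros; destruct i as [|[|[|i]]]; reflexivity. Qed.
Lemma ent_hat : forall v i j, ent (hat v) i j =
  match i, j with
  | 0%nat, 0%nat => 0 | 0%nat, 1%nat => - vent v 2 | 0%nat, _ => vent v 1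
  | 1%nat, 0%nat => vent v 2 | 1%nat, 1%nat => 0 | 1%nat, _ => - vent v 0
  | _, 0%nat => - vent v 1 | _, 1%nat => vent v 0 | _, _ => 0 end.
Proof. intros; ij_cases i j; reflexivity. Qed.

Definition SmM (F : R -> M3) := forall i j, Sm (fun t => ent (F t) i j).
Definition SmV (F : R -> V3) := forall i, Sm (fun t => vent (F t) i).

Ltac smt := repeat (first [ apply Sm_plus | apply Sm_mult | apply Sm_minus | apply Sm_opp | apply Sm_const | apply Sm_id | assumption ]).

Lemma SmM_mmul : forall A B, SmM A -> SmM B -> SmM (fun t => mmul (A t) (B t)).
Proof. intros A B HA HB i j. eapply Sm_ext. { intros t; symmetry; apply ent_mmul. }
  smt; auto. Qed.
Lemma SmM_mtr : forall A, SmM A -> SmM (fun t => mtr (A t)).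
Proof. intros A HA i j. eapply Sm_ext. { intros t; symmetry; apply ent_mtr. } auto. Qed.
Lemma SmM_madd : forall A B, SmM A -> SmM B -> SmM (fun t => madd (A t) (B t)).
Proof. intros A B HA HB i j. eapply Sm_ext. { intros t; symmetry; apply ent_madd. } smt; auto. Qed.
Lemma SmM_const : forall A, SmM (fun _ => A).
Proof. intros A i j. apply Sm_const. Qed.
Lemma SmM_mderiv : forall A, SmM A -> SmM (mderiv A).
Proof. intros A HA i j. eapply Sm_ext. { intros t; symmetry; apply ent_mderiv. } apply Sm_Derive; auto. Qed.
Lemma SmV_vderiv : forall v, SmV v -> SmV (vderiv v).
Proof. intros v Hv i. eapply Sm_ext. { intros t; symmetry; apply vent_vderiv. } apply Sm_Derive; auto. Qed.
Lemma SmV_mapp : forall A v, SmM A -> SmV v -> SmV (fun t => mapp (A t) (v t)).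
Proof. intros A v HA Hv i. eapply Sm_ext. { intros t; symmetry; apply vent_mapp. } smt; auto. Qed.
Lemma SmV_vee : forall A, SmM A -> SmV (fun t => vee (A t)).
Proof. intros A HA i. eapply Sm_ext. { intros t; symmetry; apply vent_vee. }
  destruct i as [|[|[|i]]]; auto. Qed.
Lemma Sm_dot : forall a b, SmV a -> SmV b -> Sm (fun t => dot (a t) (b t)).
Proof. intros a b Ha Hb. eapply Sm_ext. { intros t; symmetry; apply dot_vent. } smt; auto. Qed.
Lemma SmV_vsub : forall a b, SmV a -> SmV b -> SmV (fun t => vsub (a t) (b t)).
Proof. intros a b Ha Hb i. eapply Sm_ext. { intros t; symmetry; apply vent_vsub. } smt; auto. Qed.
Lemma SmV_vscale : forall c a, Sm c -> SmV a -> SmV (fun t => vscale (c t) (a t)).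
Proof. intros c a Hc Ha i. eapply Sm_ext. { intros t; symmetry; apply vent_vscale. } smt; auto. Qed.
Lemma SmV_const : forall a, SmV (fun _ => a).
Proof. intros a i; apply Sm_const. Qed.
Lemma SmM_hat : forall v, SmV v -> SmM (fun t => hat (v t)).
Proof. intros v Hv i j. eapply Sm_ext. { intros t; symmetry; apply ent_hat. }
  ij_cases i j; cbv iota; smt; auto. Qed.

Lemma smooth_M_SmM : forall L, smooth_M L -> SmM L.
Proof. intros L H i j.
  assert (E: exists i' j', (i' < 3)%nat /\ (j' < 3)%nat /\ forall A, ent A i j = ent A i' j').
  { exists (Nat.min i 2), (Nat.min j 2). split. lia. split. lia. intros A. ij_cases i j; reflexivity. }
  destruct E as [i' [j' [Hi [Hj HE]]]].
  apply Sm_ext with (fun t => ent (L t) i' j'). intros; auto.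
  apply smooth_Sm. apply H; auto. Qed.

Lemma smooth_V_SmV : forall v, smooth_V v -> SmV v.
Proof. intros v H i.
  assert (E: exists i', (i' < 3)%nat /\ forall a, vent a i = vent a i').
  { exists (Nat.min i 2). split. lia. intros a. destruct i as [|[|[|i]]]; reflexivity. }
  destruct E as [i' [Hi HE]].
  apply Sm_ext with (fun t => vent (v t) i'). intros; auto.
  apply smooth_Sm. apply H; auto. Qed.

Lemma SmV_smooth_V : forall v, SmV v -> smooth_V v.
Proof. intros v H i _. apply Sm_smooth. apply H. Qed.

Lemma Derive_sum3 : forall f1 f2 f3 g1 g2 g3 t,
  ex_derive f1 t -> ex_derive f2 t -> ex_derive f3 t ->
  ex_derive g1 t -> ex_derive g2 t -> ex_derive g3 t ->
  Derive (fun s => f1 s * g1 s + f2 s * g2 s + f3 s * g3 s) t =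
  Derive f1 t * g1 t + f1 t * Derive g1 t + (Derive f2 t * g2 t + f2 t * Derive g2 t)
  + (Derive f3 t * g3 t + f3 t * Derive g3 t).
Proof.
  intros.
  rewrite (Derive_plus (fun s => f1 s * g1 s + f2 s * g2 s) (fun s => f3 s * g3 s)).
  rewrite (Derive_plus (fun s => f1 s * g1 s) (fun s => f2 s * g2 s)).
  rewrite (Derive_mult f1 g1), (Derive_mult f2 g2), (Derive_mult f3 g3); auto.
  all: try apply (ex_derive_plus (fun s => f1 s * g1 s) (fun s => f2 s * g2 s)); try apply ex_derive_mult; auto.
Qed.

Lemma mderiv_mmul : forall A B t, SmM A -> SmM B ->
  mderiv (fun s => mmul (A s) (B s)) t = madd (mmul (mderiv A t) (B t)) (mmul (A t) (mderiv B t)).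
Proof.
  intros A B t HA HB. apply M3_ext. intros i j _ _.
  rewrite ent_mderiv, ent_madd, !ent_mmul, !ent_mderiv.
  rewrite (Derive_ext _ (fun s => ent (A s) i 0 * ent (B s) 0 j + ent (A s) i 1 * ent (B s) 1 j + ent (A s) i 2 * ent (B s) 2 j)).
  2:{ intros; apply ent_mmul. }
  rewrite Derive_sum3 by (apply Sm_ex_derive; auto). ring.
Qed.

Definition coefk (k : nat) (m : nat) : R := (-1) ^ m / INR (Factorial.fact (2 * m + k)).
Definition sF := PSeries (coefk 1).
Definition cF := PSeries (coefk 2).

Lemma coefk_radius : forall k, CV_radius (coefk k) = p_infty.
Proof.
  intros k. apply CV_radius_infinite_DAlembert.
  - intros n. unfold coefk. apply Rmult_integral_contrapositive_currified.
    apply pow_nonzero; lra. apply Rinv_neq_0_compat. apply not_0_INR. apply Factorial.fact_neq_0.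
  - apply is_lim_seq_le_le with (fun _ => 0) (fun n => / INR (S n)).
    + intros n. unfold coefk.
      replace (2 * S n + k)%nat with (S (S (2 * n + k))) by lia.
      set (F := Factorial.fact (2 * n + k)).
      change (Factorial.fact (S (S (2 * n + k)))) with (S (S (2 * n + k)) * (S (2 * n + k) * F))%nat.
      rewrite !mult_INR. 
      assert (HF : 0 < INR F) by (apply lt_0_INR; apply Factorial.lt_O_fact).
      assert (H1 : INR (S n) <= INR (S (S (2 * n + k)))) by (apply le_INR; lia).
      assert (H2 : 1 <= INR (S (2 * n + k))) by (apply (le_INR 1); lia).
      assert (H0 : 0 < INR (S n)) by (apply lt_0_INR; lia).
      replace ((-1) ^ S n / (INR (S (S (2 * n + k))) * (INR (S (2 * n + k)) * INR F)) / ((-1) ^ n / INR F))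
        with (- / (INR (S (S (2 * n + k))) * INR (S (2 * n + k)))).
      2:{ simpl pow. field. repeat split; try lra. apply pow_nonzero; lra. }
      rewrite Rabs_Ropp. rewrite Rabs_right.
      2:{ apply Rle_ge. left. apply Rinv_0_lt_compat. nra. }
      split. left. apply Rinv_0_lt_compat. nra.
      apply Rinv_le_contravar. lra. nra.
    + apply is_lim_seq_const.
    + apply (is_lim_seq_incr_1 (fun n => / INR n)).
      replace (Finite 0) with (Rbar_inv p_infty) by reflexivity.
      apply is_lim_seq_inv. apply is_lim_seq_INR. discriminate.
Qed.

Lemma Sm_PSeries : forall a, CV_radius a = p_infty -> Sm (PSeries a).
Proof.
  intros a Ha n. revert a Ha. induction n; simpl; auto. intros a Ha. split.
  - intros x. apply ex_derive_PSeries. rewrite Ha. simpl; auto.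
  - apply Cn_ext with (PSeries (PS_derive a)).
    + intros x. symmetry. apply Derive_PSeries. rewrite Ha; simpl; auto.
    + apply IHn. rewrite CV_radius_derive; auto.
Qed.

Lemma Sm_sF : Sm sF. Proof. apply Sm_PSeries, coefk_radius. Qed.
Lemma Sm_cF : Sm cF. Proof. apply Sm_PSeries, coefk_radius. Qed.
Lemma sF0 : sF 0 = 1.
Proof. unfold sF. rewrite PSeries_0. unfold coefk. simpl. field. Qed.

Lemma PSeries_is_lim : forall a x, CV_radius a = p_infty ->
  is_lim_seq (sum_n (fun k => a k * x ^ k)) (PSeries a x).
Proof.
  intros a x Ha. assert (E : ex_pseries a x). { apply CV_radius_inside. rewrite Ha; simpl; auto. }
  apply ex_pseries_R in E. apply Series_correct in E. exact E.
Qed.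

Lemma mmul_mI_r : forall A, mmul A mI = A.
Proof. intros A. mext; ring. Qed.
Lemma mmul_mscale_r : forall c A B, mmul A (mscale c B) = mscale c (mmul A B).
Proof. intros. mext; ring. Qed.
Lemma mscale_mscale : forall c d A, mscale c (mscale d A) = mscale (c * d) A.
Proof. intros. mext; ring. Qed.
Lemma mscale_1 : forall A, mscale 1 A = A.
Proof. intros. destruct A as [[a1 a2 a3] [a4 a5 a6] [a7 a8 a9]]. mext; ring. Qed.
Lemma hat3 : forall u, mmul (hat u) (mmul (hat u) (hat u)) = mscale (- dot u u) (hat u).
Proof. intros [x y z]. mext; unfold dot; simpl; ring. Qed.

Lemma mpow_S : forall A n, mpow A (S n) = mmul A (mpow A n).
Proof. reflexivity. Qed.

Lemma mpow_hat : forall u m,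
  mpow (hat u) (2 * m + 1) = mscale ((- dot u u) ^ m) (hat u) /\
  mpow (hat u) (2 * m + 2) = mscale ((- dot u u) ^ m) (mmul (hat u) (hat u)).
Proof.
  intros u m. induction m as [|m [IH1 IH2]].
  - simpl. rewrite mmul_mI_r, !mscale_1. auto.
  - replace (2 * S m + 1)%nat with (S (2 * m + 2)) by lia.
    replace (2 * S m + 2)%nat with (S (S (2 * m + 2))) by lia.
    assert (E1 : mpow (hat u) (S (2 * m + 2)) = mscale ((- dot u u) ^ S m) (hat u)).
    { rewrite mpow_S, IH2, mmul_mscale_r, hat3, mscale_mscale. f_equal. simpl. ring. }
    split; auto. rewrite mpow_S, E1, mmul_mscale_r. auto.
Qed.

Fixpoint psum (a : nat -> R) (N : nat) : R := match N with O => 0 | S N => psum a N + a N end.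

Lemma psum_sum_n : forall a N, psum a (S N) = sum_n a N.
Proof. intros a N. induction N. simpl. rewrite sum_O. ring.
  rewrite sum_Sn. change (psum a (S (S N))) with (psum a (S N) + a (S N)). rewrite IHN. reflexivity. Qed.

Lemma psum_lim : forall a l, is_lim_seq (sum_n a) l -> is_lim_seq (psum a) l.
Proof. intros a l H. apply is_lim_seq_incr_1. apply is_lim_seq_ext with (sum_n a); auto.
  intros; symmetry; apply psum_sum_n. Qed.

Lemma filterlim_div2 : forall k, filterlim (fun n => Nat.div2 (n + k)) eventually eventually.
Proof.
  intros k P [N HN]. exists (2 * N)%nat. intros n Hn. apply HN.
  rewrite Nat.div2_div. apply Nat.div_le_lower_bound; lia.
Qed.

Lemma ent_mexp : forall A i j, ent (mexp A) i j = Series (fun k => ent (mpow A k) i j / INR (Factorial.fact k)).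
Proof. intros; ij_cases i j; reflexivity. Qed.
Lemma ent_mI : forall i j, ent mI i j = if Nat.eqb (Nat.min i 2) (Nat.min j 2) then 1 else 0.
Proof. intros; ij_cases i j; reflexivity. Qed.

Lemma pow_opp : forall q m, (- q) ^ m = (-1) ^ m * q ^ m.
Proof. intros q m. induction m; simpl. ring. rewrite IHm. ring. Qed.

Lemma rodrigues : forall u i j,
  ent (mexp (hat u)) i j = ent mI i j + sF (dot u u) * ent (hat u) i j
     + cF (dot u u) * ent (mmul (hat u) (hat u)) i j.
Proof.
  intros u i j. rewrite ent_mexp. apply is_series_unique.
  set (q := dot u u). set (h := ent (hat u) i j). set (h2 := ent (mmul (hat u) (hat u)) i j).
  set (d := ent mI i j).
  set (uk := fun k => ent (mpow (hat u) k) i j / INR (Factorial.fact k)).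
  set (S1 := fun m => coefk 1 m * q ^ m). set (S2 := fun m => coefk 2 m * q ^ m).
  assert (Hodd : forall m, uk (2 * m + 1)%nat = h * S1 m).
  { intros m. unfold uk, S1, coefk. rewrite (proj1 (mpow_hat u m)), ent_mscale. fold q h.
    rewrite pow_opp. field. apply not_0_INR, Factorial.fact_neq_0. }
  assert (Hev : forall m, uk (2 * m + 2)%nat = h2 * S2 m).
  { intros m. unfold uk, S2, coefk. rewrite (proj2 (mpow_hat u m)), ent_mscale. fold q h2.
    rewrite pow_opp. field. apply not_0_INR, Factorial.fact_neq_0. }
  assert (H0 : uk 0%nat = d). { unfold uk. simpl. unfold d. field. }
  assert (P : forall m, sum_n uk (2 * m) = d + h * psum S1 m + h2 * psum S2 m /\
                        sum_n uk (2 * m + 1) = d + h * psum S1 (S m) + h2 * psum S2 m).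
  { induction m as [|m [IH1 IH2]].
    - simpl. rewrite sum_O. replace 1%nat with (S 0) by reflexivity. rewrite sum_Sn, sum_O.
      rewrite H0. change (plus d (uk 1%nat)) with (d + uk 1%nat).
      rewrite (Hodd 0%nat : uk 1%nat = _). simpl psum. split; ring.
    - assert (E1 : sum_n uk (2 * S m) = d + h * psum S1 (S m) + h2 * psum S2 (S m)).
      { replace (2 * S m)%nat with (S (2 * m + 1)) by lia. rewrite sum_Sn, IH2.
        replace (S (2 * m + 1)) with (2 * m + 2)%nat by lia. rewrite Hev.
        change (plus ?a ?b) with (a + b). simpl psum. match goal with |- ?a = ?b => change (@eq R a b) end. ring. }
      split; auto.
      replace (2 * S m + 1)%nat with (S (2 * S m)) by lia. rewrite sum_Sn, E1.
      replace (S (2 * S m)) with (2 * S m + 1)%nat by lia. rewrite Hodd.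
      change (plus ?a ?b) with (a + b). simpl psum. match goal with |- ?a = ?b => change (@eq R a b) end. ring. }
  assert (Q : forall n, sum_n uk n = d + h * psum S1 (Nat.div2 (n + 1)) + h2 * psum S2 (Nat.div2 (n + 0))).
  { intros n. destruct (Nat.Even_or_Odd n) as [[m Hm] | [m Hm]]; subst n.
    - replace (2 * m + 1)%nat with (S (2 * m)) by lia. rewrite Nat.div2_succ_double.
      rewrite Nat.add_0_r, Nat.div2_double. apply P.
    - replace (2 * m + 1 + 1)%nat with (2 * S m)%nat by lia. rewrite Nat.div2_double.
      replace (2 * m + 1 + 0)%nat with (S (2 * m)) by lia. rewrite Nat.div2_succ_double. apply P. }
  assert (L : is_lim_seq (sum_n uk) (d + h * sF q + h2 * cF q)).
  { apply is_lim_seq_ext with (fun n => d + h * psum S1 (Nat.div2 (n + 1)) + h2 * psum S2 (Nat.div2 (n + 0))).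
    { intros; symmetry; apply Q. }
    apply is_lim_seq_plus'. apply is_lim_seq_plus'. apply is_lim_seq_const.
    - apply (is_lim_seq_scal_l _ h (Finite (sF q))).
      apply (is_lim_seq_subseq (psum S1) (sF q) (fun n => Nat.div2 (n + 1))).
      apply filterlim_div2. apply psum_lim. apply PSeries_is_lim, coefk_radius.
    - apply (is_lim_seq_scal_l _ h2 (Finite (cF q))).
      apply (is_lim_seq_subseq (psum S2) (cF q) (fun n => Nat.div2 (n + 0))).
      apply filterlim_div2. apply psum_lim. apply PSeries_is_lim, coefk_radius. }
  replace (d + sF q * h + cF q * h2) with (d + h * sF q + h2 * cF q) by ring.
  exact L.
Qed.

Definition bnd (T : R) (f : R -> R) := exists M, 0 <= M /\ forall t, 0 <= t <= T -> Rabs (f t) <= M.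
Definition UB (T : R) (F : R -> R -> R) := exists B, 0 <= B /\ forall i t, 0 <= t <= T -> Rabs i <= 1 -> Rabs (F i t) <= B.
Definition Ex2 (T : R) (F : R -> R -> R) (a b : R -> R) :=
  bnd T a /\ bnd T b /\ exists C, 0 <= C /\
    forall i t, 0 <= t <= T -> Rabs i <= 1 -> Rabs (F i t - a t - i * b t) <= C * (i * i).

Lemma bnd_cont : forall T f, (forall t, 0 <= t <= T -> continuity_pt f t) -> bnd T f.
Proof.
  intros T f H. destruct (Rle_dec 0 T) as [HT|HT].
  - destruct (continuity_ab_maj (fun t => Rabs (f t)) 0 T HT) as [M [HM _]].
    + intros c Hc. apply continuity_pt_comp with (f1 := f) (f2 := Rabs); auto. apply Rcontinuity_abs.
    + exists (Rabs (f M)). split. apply Rabs_pos. auto.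
  - exists 0. split. lra. intros t Ht. lra.
Qed.

Lemma bnd_Sm : forall T f, Sm f -> bnd T f.
Proof. intros; apply bnd_cont; intros; apply Sm_continuous; auto. Qed.

Lemma Ex2_eq : forall T F a b F' a' b', Ex2 T F a b ->
  (forall i t, 0 <= t <= T -> Rabs i <= 1 -> F i t = F' i t) ->
  (forall t, 0 <= t <= T -> a t = a' t) -> (forall t, 0 <= t <= T -> b t = b' t) -> Ex2 T F' a' b'.
Proof.
  intros T F a b F' a' b' [[Ma [HMa Ha]] [[Mb [HMb Hb]] [C [HC H]]]] EF Ea Eb.
  split; [|split].
  - exists Ma; split; auto; intros t Ht; rewrite <- Ea; auto.
  - exists Mb; split; auto; intros t Ht; rewrite <- Eb; auto.
  - exists C; split; auto; intros i t Ht Hi. rewrite <- EF, <- Ea, <- Eb; auto.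
Qed.

Lemma Rabs_mult_le : forall x y X Y, Rabs x <= X -> Rabs y <= Y -> Rabs (x * y) <= X * Y.
Proof. intros. rewrite Rabs_mult. apply Rmult_le_compat; auto; apply Rabs_pos. Qed.

Lemma Ex2_plus : forall T F G a b c d, Ex2 T F a b -> Ex2 T G c d ->
  Ex2 T (fun i t => F i t + G i t) (fun t => a t + c t) (fun t => b t + d t).
Proof.
  intros T F G a b c d [[Ma [HMa Ha]] [[Mb [HMb Hb]] [C [HC H]]]] [[Mc [HMc Hc]] [[Md [HMd Hd]] [C' [HC' H']]]].
  split; [|split].
  - exists (Ma + Mc). split. lra. intros t Ht. eapply Rle_trans. apply Rabs_triang. specialize (Ha t Ht); specialize (Hc t Ht); lra.
  - exists (Mb + Md). split. lra. intros t Ht. eapply Rle_trans. apply Rabs_triang. specialize (Hb t Ht); specialize (Hd t Ht); lra.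
  - exists (C + C'). split. lra. intros i t Ht Hi.
    replace (F i t + G i t - (a t + c t) - i * (b t + d t)) with ((F i t - a t - i * b t) + (G i t - c t - i * d t)) by ring.
    eapply Rle_trans. apply Rabs_triang. specialize (H i t Ht Hi); specialize (H' i t Ht Hi). nra.
Qed.

Lemma Ex2_mult : forall T F G a b c d, Ex2 T F a b -> Ex2 T G c d ->
  Ex2 T (fun i t => F i t * G i t) (fun t => a t * c t) (fun t => a t * d t + b t * c t).
Proof.
  intros T F G a b c d [[Ma [HMa Ha]] [[Mb [HMb Hb]] [C [HC H]]]] [[Mc [HMc Hc]] [[Md [HMd Hd]] [C' [HC' H']]]].
  split; [|split].
  - exists (Ma * Mc). split. nra. intros t Ht. apply Rabs_mult_le; auto.
  - exists (Ma * Md + Mb * Mc). split. nra. intros t Ht. eapply Rle_trans. apply Rabs_triang.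
    apply Rplus_le_compat; apply Rabs_mult_le; auto.
  - exists (Mb * Md + (Ma + Mb) * C' + C * (Mc + Md) + C * C'). split. nra. intros i t Ht Hi.
    specialize (H i t Ht Hi); specialize (H' i t Ht Hi).
    specialize (Ha t Ht); specialize (Hb t Ht); specialize (Hc t Ht); specialize (Hd t Ht).
    set (r1 := F i t - a t - i * b t) in *. set (r2 := G i t - c t - i * d t) in *.
    replace (F i t * G i t - a t * c t - i * (a t * d t + b t * c t))
      with ((i * i) * (b t * d t) + (a t + i * b t) * r2 + r1 * (c t + i * d t) + r1 * r2)
      by (unfold r1, r2; ring).
    assert (Hii : 0 <= i * i) by nra.
    assert (Hi2 : i * i <= 1). { apply Rabs_le_between in Hi. nra. }
    assert (Hib : Rabs (i * b t) <= Mb). { rewrite Rabs_mult. assert (0 <= Rabs (b t)) by apply Rabs_pos. assert (0 <= Rabs i) by apply Rabs_pos. nra. }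
    assert (Hid : Rabs (i * d t) <= Md). { rewrite Rabs_mult. assert (0 <= Rabs (d t)) by apply Rabs_pos. assert (0 <= Rabs i) by apply Rabs_pos. nra. }
    assert (B1 : Rabs ((i * i) * (b t * d t)) <= (i * i) * (Mb * Md)).
    { rewrite Rabs_mult, (Rabs_right (i * i)) by lra. apply Rmult_le_compat_l; auto. apply Rabs_mult_le; auto. }
    assert (B2 : Rabs ((a t + i * b t) * r2) <= (Ma + Mb) * (C' * (i * i))).
    { apply Rabs_mult_le; auto. eapply Rle_trans. apply Rabs_triang. lra. }
    assert (B3 : Rabs (r1 * (c t + i * d t)) <= (C * (i * i)) * (Mc + Md)).
    { apply Rabs_mult_le; auto. eapply Rle_trans. apply Rabs_triang. lra. }
    assert (B4 : Rabs (r1 * r2) <= (C * (i * i)) * (C' * (i * i))).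
    { apply Rabs_mult_le; auto. }
    assert (B4' : (C * (i * i)) * (C' * (i * i)) <= C * C' * (i * i)).
    { assert (0 <= C * C') by nra. 
      replace ((C * (i * i)) * (C' * (i * i))) with ((C * C') * (i * i) * (i * i)) by ring.
      assert (0 <= C * C' * (i * i)) by nra. nra. }
    eapply Rle_trans. apply Rabs_triang. eapply Rle_trans. apply Rplus_le_compat_r. apply Rabs_triang.
    eapply Rle_trans. apply Rplus_le_compat_r. apply Rplus_le_compat_r. apply Rabs_triang.
    nra.
Qed.

Lemma Ex2_cst : forall T g, bnd T g -> Ex2 T (fun _ t => g t) g (fun _ => 0).
Proof.
  intros T g Hg. split; [auto|split].
  - exists 0; split; [lra|]. intros; rewrite Rabs_R0; lra.
  - exists 0; split; [lra|]. intros. replace (g t - g t - i * 0) with 0 by ring. rewrite Rabs_R0. lra.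
Qed.

Lemma Ex2_iota : forall T, Ex2 T (fun i _ => i) (fun _ => 0) (fun _ => 1).
Proof.
  intros T. split; [|split].
  - exists 0; split; [lra|]. intros; rewrite Rabs_R0; lra.
  - exists 1; split; [lra|]. intros; rewrite Rabs_R1; lra.
  - exists 0; split; [lra|]. intros. replace (i - 0 - i * 1) with 0 by ring. rewrite Rabs_R0. lra.
Qed.

Lemma Ex2_small : forall T F, (exists C, 0 <= C /\ forall i t, 0 <= t <= T -> Rabs i <= 1 -> Rabs (F i t) <= C * (i * i)) ->
  Ex2 T F (fun _ => 0) (fun _ => 0).
Proof.
  intros T F [C [HC H]]. split; [|split].
  - exists 0; split; [lra|]. intros; rewrite Rabs_R0; lra.
  - exists 0; split; [lra|]. intros; rewrite Rabs_R0; lra.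
  - exists C; split; auto. intros. replace (F i t - 0 - i * 0) with (F i t) by ring. auto.
Qed.

Lemma Ex2_UB : forall T F a b, Ex2 T F a b -> UB T F.
Proof.
  intros T F a b [[Ma [HMa Ha]] [[Mb [HMb Hb]] [C [HC H]]]].
  exists (Ma + Mb + C). split. lra. intros i t Ht Hi.
  specialize (H i t Ht Hi). specialize (Ha t Ht). specialize (Hb t Ht).
  assert (Hi2 : i * i <= 1). { apply Rabs_le_between in Hi. nra. }
  assert (Hib : Rabs (i * b t) <= Mb). { rewrite Rabs_mult. assert (0 <= Rabs (b t)) by apply Rabs_pos. assert (0 <= Rabs i) by apply Rabs_pos. nra. }
  replace (F i t) with ((F i t - a t - i * b t) + a t + i * b t) by ring.
  eapply Rle_trans. apply Rabs_triang. eapply Rle_trans. apply Rplus_le_compat_r. apply Rabs_triang.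
  assert (0 <= i * i) by nra. nra.
Qed.

Lemma Ex2_ub_mul : forall T F G, UB T F -> Ex2 T G (fun _ => 0) (fun _ => 0) ->
  Ex2 T (fun i t => F i t * G i t) (fun _ => 0) (fun _ => 0).
Proof.
  intros T F G [B [HB HF]] [_ [_ [C [HC H]]]]. apply Ex2_small. exists (B * C). split. nra.
  intros i t Ht Hi. specialize (H i t Ht Hi). replace (G i t - 0 - i * 0) with (G i t) in H by ring.
  replace (B * C * (i * i)) with (B * (C * (i * i))) by ring. apply Rabs_mult_le; auto.
Qed.

(* derivative of a parametrized integral from a uniform second order expansion *)
Lemma Ex2_is_derive : forall T F a b, 0 < T -> Ex2 T F a b ->
  (forall i, Rabs i <= 1 -> ex_RInt (F i) 0 T) -> ex_RInt b 0 T ->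
  is_derive (fun i => RInt (F i) 0 T) 0 (RInt b 0 T).
Proof.
  intros T F a b HT [_ [_ [C [HC H]]]] HF Hb.
  apply is_derive_Reals. intros eps Heps.
  assert (HTC : 0 < T * C + 1) by nra.
  exists (mkposreal (Rmin 1 (eps / (T * C + 1))) ltac:(apply Rmin_pos; [lra| apply Rdiv_lt_0_compat; lra])).
  intros h Hh Hhd. simpl in Hhd.
  assert (Hh1 : Rabs h <= 1). { eapply Rle_trans. left; apply Hhd. apply Rmin_l. }
  assert (Hhe : Rabs h < eps / (T * C + 1)). { eapply Rlt_le_trans. apply Hhd. apply Rmin_r. }
  rewrite Rplus_0_l.
  assert (E0 : forall t, 0 <= t <= T -> F 0 t = a t).
  { intros t Ht. specialize (H 0 t Ht). rewrite Rabs_R0 in H. specialize (H ltac:(lra)).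
    replace (C * (0 * 0)) with 0 in H by ring. replace (F 0 t - a t - 0 * b t) with (F 0 t - a t) in H by ring.
    apply Rabs_le_between in H. lra. }
  assert (I1 := RInt_correct _ _ _ (HF h Hh1)).
  assert (I0 := RInt_correct _ _ _ (HF 0 ltac:(rewrite Rabs_R0; lra))).
  assert (I2 := RInt_correct _ _ _ Hb).
  assert (I3 : is_RInt (fun t => F h t - F 0 t - h * b t) 0 T (RInt (F h) 0 T - RInt (F 0) 0 T - h * RInt b 0 T)).
  { apply (is_RInt_minus (fun t => F h t - F 0 t) (fun t => h * b t)).
    apply (is_RInt_minus (F h) (F 0)); auto. apply (is_RInt_scal b); auto. }
  assert (Bd : Rabs (RInt (F h) 0 T - RInt (F 0) 0 T - h * RInt b 0 T) <= (T - 0) * (C * (h * h))).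
  { rewrite <- (is_RInt_unique _ _ _ _ I3). apply abs_RInt_le_const. lra. eexists; eauto.
    intros t Ht. rewrite E0 by auto. apply H; auto. }
  replace ((RInt (F h) 0 T - RInt (F 0) 0 T) / h - RInt b 0 T)
    with ((RInt (F h) 0 T - RInt (F 0) 0 T - h * RInt b 0 T) / h) by (field; auto).
  unfold Rdiv. rewrite Rabs_mult, Rabs_inv.
  assert (Hah : 0 < Rabs h) by (apply Rabs_pos_lt; auto).
  apply Rmult_le_compat_r with (r := / Rabs h) in Bd. 2:{ left; apply Rinv_0_lt_compat; auto. }
  eapply Rle_lt_trans. apply Bd.
  replace ((T - 0) * (C * (h * h)) * / Rabs h) with (T * C * Rabs h).
  2:{ assert (Hsq : h * h = Rabs h * Rabs h).
        { rewrite <- Rabs_mult. rewrite Rabs_right; auto. apply Rle_ge. nra. }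
      rewrite Hsq. field. lra. }
  apply Rmult_lt_compat_r with (r := T * C + 1) in Hhe; auto.
  unfold Rdiv in Hhe. rewrite Rmult_assoc, Rinv_l in Hhe by lra.
  assert (0 <= T * C) by nra. nra.
Qed.

Definition ExM T (F : R -> R -> M3) (A B : R -> M3) :=
  forall i j, Ex2 T (fun x t => ent (F x t) i j) (fun t => ent (A t) i j) (fun t => ent (B t) i j).
Definition ExV T (F : R -> R -> V3) (a b : R -> V3) :=
  forall i, Ex2 T (fun x t => vent (F x t) i) (fun t => vent (a t) i) (fun t => vent (b t) i).

Ltac ex2b := repeat (first [ apply Ex2_plus | apply Ex2_mult | eassumption | apply Ex2_iota ]).

Lemma ExM_eq : forall T F A B F' A' B', ExM T F A B ->
  (forall x t, 0 <= t <= T -> Rabs x <= 1 -> F x t = F' x t) ->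
  (forall t, 0 <= t <= T -> A t = A' t) -> (forall t, 0 <= t <= T -> B t = B' t) -> ExM T F' A' B'.
Proof. intros T F A B F' A' B' H E1 E2 E3 i j. eapply Ex2_eq. apply (H i j).
  intros; cbv beta; rewrite E1; auto. intros; cbv beta; rewrite E2; auto. intros; cbv beta; rewrite E3; auto. Qed.

Lemma ExV_eq : forall T F A B F' A' B', ExV T F A B ->
  (forall x t, 0 <= t <= T -> Rabs x <= 1 -> F x t = F' x t) ->
  (forall t, 0 <= t <= T -> A t = A' t) -> (forall t, 0 <= t <= T -> B t = B' t) -> ExV T F' A' B'.
Proof. intros T F A B F' A' B' H E1 E2 E3 i. eapply Ex2_eq. apply (H i).
  intros; cbv beta; rewrite E1; auto. intros; cbv beta; rewrite E2; auto. intros; cbv beta; rewrite E3; auto. Qed.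

Lemma ExM_mmul : forall T F G a b c d, ExM T F a b -> ExM T G c d ->
  ExM T (fun x t => mmul (F x t) (G x t)) (fun t => mmul (a t) (c t)) (fun t => madd (mmul (a t) (d t)) (mmul (b t) (c t))).
Proof.
  intros T F G a b c d HF HG i j.
  pose proof (HF i 0%nat); pose proof (HF i 1%nat); pose proof (HF i 2%nat);
  pose proof (HG 0%nat j); pose proof (HG 1%nat j); pose proof (HG 2%nat j).
  eapply (Ex2_eq T (fun x t => ent (F x t) i 0 * ent (G x t) 0 j + ent (F x t) i 1 * ent (G x t) 1 j + ent (F x t) i 2 * ent (G x t) 2 j)).
  ex2b.
  - intros; cbv beta. rewrite ent_mmul; reflexivity.
  - intros; cbv beta; rewrite ent_mmul; reflexivity.
  - intros; cbv beta. rewrite ent_madd, !ent_mmul. ring.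
Qed.

Lemma ExM_madd : forall T F G a b c d, ExM T F a b -> ExM T G c d ->
  ExM T (fun x t => madd (F x t) (G x t)) (fun t => madd (a t) (c t)) (fun t => madd (b t) (d t)).
Proof.
  intros T F G a b c d HF HG i j.
  eapply (Ex2_eq T (fun x t => ent (F x t) i j + ent (G x t) i j)).
  apply Ex2_plus; auto.
  all: intros; cbv beta; rewrite ent_madd; reflexivity.
Qed.

Lemma ExM_mtr : forall T F a b, ExM T F a b ->
  ExM T (fun x t => mtr (F x t)) (fun t => mtr (a t)) (fun t => mtr (b t)).
Proof.
  intros T F a b HF i j. eapply (Ex2_eq T (fun x t => ent (F x t) j i)). apply HF.
  all: intros; cbv beta; rewrite ent_mtr; reflexivity.
Qed.

Lemma ExV_vee : forall T F a b, ExM T F a b ->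
  ExV T (fun x t => vee (F x t)) (fun t => vee (a t)) (fun t => vee (b t)).
Proof.
  intros T F a b HF i. destruct i as [|[|i]]; [apply (HF 2%nat 1%nat) | apply (HF 0%nat 2%nat) | apply (HF 1%nat 0%nat)].
Qed.

Lemma ExV_mapp : forall T J F a b, ExV T F a b ->
  ExV T (fun x t => mapp J (F x t)) (fun t => mapp J (a t)) (fun t => mapp J (b t)).
Proof.
  intros T J F a b HF i.
  pose proof (HF 0%nat); pose proof (HF 1%nat); pose proof (HF 2%nat).
  assert (HJ : forall k, Ex2 T (fun _ _ => ent J i k) (fun _ => ent J i k) (fun _ => 0)).
  { intros k. apply (Ex2_cst T (fun _ => ent J i k)). exists (Rabs (ent J i k)). split. apply Rabs_pos. intros; lra. }
  pose proof (HJ 0%nat); pose proof (HJ 1%nat); pose proof (HJ 2%nat).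
  eapply (Ex2_eq T (fun x t => ent J i 0 * vent (F x t) 0 + ent J i 1 * vent (F x t) 1 + ent J i 2 * vent (F x t) 2)).
  ex2b.
  - intros; cbv beta; rewrite vent_mapp; reflexivity.
  - intros; cbv beta; rewrite vent_mapp; reflexivity.
  - intros; cbv beta; rewrite vent_mapp; ring.
Qed.

Lemma Ex2_dot : forall T F G a b c d, ExV T F a b -> ExV T G c d ->
  Ex2 T (fun x t => dot (F x t) (G x t)) (fun t => dot (a t) (c t)) (fun t => dot (a t) (d t) + dot (b t) (c t)).
Proof.
  intros T F G a b c d HF HG.
  pose proof (HF 0%nat); pose proof (HF 1%nat); pose proof (HF 2%nat);
  pose proof (HG 0%nat); pose proof (HG 1%nat); pose proof (HG 2%nat).
  eapply (Ex2_eq T (fun x t => vent (F x t) 0 * vent (G x t) 0 + vent (F x t) 1 * vent (G x t) 1 + vent (F x t) 2 * vent (G x t) 2)).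
  ex2b.
  - intros; reflexivity.
  - intros; reflexivity.
  - intros; unfold dot; simpl; ring.
Qed.

Lemma Ex2_scal : forall T c F a b, Ex2 T F a b ->
  Ex2 T (fun x t => c * F x t) (fun t => c * a t) (fun t => c * b t).
Proof.
  intros T c F a b H. eapply (Ex2_eq T (fun x t => c * F x t)).
  apply Ex2_mult. apply (Ex2_cst T (fun _ => c)). exists (Rabs c). split. apply Rabs_pos. intros; lra. exact H.
  all: intros; simpl; ring.
Qed.

Lemma ExM_cst : forall T A, SmM A -> ExM T (fun _ t => A t) A (fun _ => mzero).
Proof.
  intros T A HA i j. eapply Ex2_eq. apply (Ex2_cst T (fun t => ent (A t) i j)). apply bnd_Sm. apply HA.
  all: intros; try reflexivity. rewrite ent_mzero; reflexivity.
Qed.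

Ltac etac := repeat match goal with |- context [fun x : R => ?f x] => change (fun x : R => f x) with f end.

Definition Evar (dth : R -> V3) (x t : R) : M3 := mexp (mscale x (hat (dth t))).

Lemma hat_vscale : forall x v, hat (vscale x v) = mscale x (hat v).
Proof. intros x [a b c]. mext; ring. Qed.
Lemma mscale_mmul2 : forall x A, mmul (mscale x A) (mscale x A) = mscale (x * x) (mmul A A).
Proof. intros. mext; ring. Qed.

Lemma rod_E : forall dth x t i j, ent (Evar dth x t) i j =
  ent mI i j + sF (x * x * dot (dth t) (dth t)) * (x * ent (hat (dth t)) i j)
  + cF (x * x * dot (dth t) (dth t)) * (x * x * ent (mmul (hat (dth t)) (hat (dth t))) i j).
Proof.
  intros. unfold Evar. rewrite <- hat_vscale, rodrigues. rewrite hat_vscale, mscale_mmul2, !ent_mscale.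
  assert (Hd : dot (vscale x (dth t)) (vscale x (dth t)) = x * x * dot (dth t) (dth t)).
  { destruct (dth t); unfold dot; simpl; ring. }
  rewrite Hd. ring.
Qed.

Lemma Derive_rod : forall s c q h h2 x t d, Sm s -> Sm c -> Sm q -> Sm h -> Sm h2 ->
 Derive (fun u => d + s (x*x*q u) * (x * h u) + c (x*x*q u) * (x*x*h2 u)) t =
 Derive s (x*x*q t) * ((x*x*Derive q t) * (x * h t)) + s (x*x*q t) * (x * Derive h t) +
 (Derive c (x*x*q t) * ((x*x*Derive q t) * (x*x*h2 t)) + c (x*x*q t) * (x*x*Derive h2 t)).
Proof.
  intros. apply is_derive_unique. auto_derive.
  - repeat split; apply Sm_ex_derive; auto.
  - etac. ring.
Qed.

Lemma Sm_bnd_int : forall f, Sm f -> forall Q, exists B, 0 <= B /\ forall y, Rabs y <= Q -> Rabs (f y) <= B.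
Proof.
  intros f Hf Q. destruct (Rle_dec 0 Q) as [HQ|HQ].
  - destruct (continuity_ab_maj (fun y => Rabs (f y)) (- Q) Q) as [M [HM _]]. lra.
    + intros c Hc. apply continuity_pt_comp with (f1 := f) (f2 := Rabs). apply Sm_continuous; auto. apply Rcontinuity_abs.
    + exists (Rabs (f M)). split. apply Rabs_pos. intros y Hy. apply HM. apply Rabs_le_between in Hy. lra.
  - exists 0. split. lra. intros y Hy. pose proof (Rabs_pos y). lra.
Qed.

Lemma sq_le1 : forall x, Rabs x <= 1 -> 0 <= x * x <= 1.
Proof. intros x Hx. apply Rabs_le_between in Hx. split; nra. Qed.

Lemma Ex2_PS : forall T s q, Sm s -> Sm q -> Ex2 T (fun x t => s (x * x * q t)) (fun _ => s 0) (fun _ => 0).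
Proof.
  intros T s q Hs Hq. destruct (bnd_Sm T q Hq) as [Q [HQ Hqb]].
  destruct (Sm_bnd_int (Derive s) (Sm_Derive s Hs) Q) as [B [HB HBd]].
  split; [|split].
  - exists (Rabs (s 0)). split. apply Rabs_pos. intros; lra.
  - exists 0. split. lra. intros; rewrite Rabs_R0; lra.
  - exists (B * Q). split. nra. intros x t Ht Hx.
    set (y := x * x * q t).
    pose proof (sq_le1 x Hx) as Hxx.
    assert (Hy : Rabs y <= (x * x) * Q).
    { unfold y. rewrite Rabs_mult, (Rabs_right (x * x)) by lra. apply Rmult_le_compat_l; auto. lra. }
    destruct (MVT_gen s 0 y (Derive s)) as [c [Hc Hmvt]].
    + intros z Hz. apply Derive_correct. apply Sm_ex_derive; auto.
    + intros z Hz. apply Sm_continuous; auto.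
    + replace (s y - s 0 - x * 0) with (s y - s 0) by ring. rewrite Hmvt.
      assert (Hcy : Rabs c <= Rabs y).
      { destruct Hc as [Hc1 Hc2]. unfold Rmin, Rmax in *. destruct (Rle_dec 0 y).
        - rewrite !Rabs_right; lra.
        - rewrite !Rabs_left1; lra. }
      rewrite Rabs_mult. replace (y - 0) with y by ring.
      assert (Hdc : Rabs (Derive s c) <= B). { apply HBd. assert (x * x * Q <= Q) by nra. lra. }
      assert (0 <= Rabs y) by apply Rabs_pos.
      assert (0 <= Rabs (Derive s c)) by apply Rabs_pos.
      nra.
Qed.

Lemma UB_PS : forall T s q, Sm s -> Sm q -> UB T (fun x t => s (x * x * q t)).
Proof.
  intros T s q Hs Hq. destruct (bnd_Sm T q Hq) as [Q [HQ Hqb]].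
  destruct (Sm_bnd_int s Hs Q) as [B [HB HBd]].
  exists B. split; auto. intros x t Ht Hx. apply HBd.
  pose proof (sq_le1 x Hx) as Hxx.
  rewrite Rabs_mult, (Rabs_right (x * x)) by lra. specialize (Hqb t Ht). nra.
Qed.

Lemma Ex2_i1 : forall T g, bnd T g -> Ex2 T (fun x t => x * g t) (fun _ => 0) g.
Proof.
  intros T g Hg. eapply (Ex2_eq T (fun x t => x * g t)). apply Ex2_mult. apply Ex2_iota. apply (Ex2_cst T g Hg).
  all: intros; simpl; ring.
Qed.

Lemma Ex2_i2 : forall T g, bnd T g -> Ex2 T (fun x t => x * x * g t) (fun _ => 0) (fun _ => 0).
Proof.
  intros T g Hg. eapply (Ex2_eq T (fun x t => x * x * g t)). apply Ex2_mult. apply Ex2_mult; apply Ex2_iota. apply (Ex2_cst T g Hg).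
  all: intros; simpl; ring.
Qed.

Lemma Ex2_zero_mult : forall T F G a b, Ex2 T F (fun _ => 0) (fun _ => 0) -> Ex2 T G a b ->
  Ex2 T (fun x t => F x t * G x t) (fun _ => 0) (fun _ => 0).
Proof.
  intros. eapply (Ex2_eq T (fun x t => F x t * G x t)). apply Ex2_mult; eauto.
  all: intros; simpl; ring.
Qed.

Lemma Sm_rodform : forall dth x i j, SmV dth ->
  Sm (fun t => ent mI i j + sF (x * x * dot (dth t) (dth t)) * (x * ent (hat (dth t)) i j)
  + cF (x * x * dot (dth t) (dth t)) * (x * x * ent (mmul (hat (dth t)) (hat (dth t))) i j)).
Proof.
  intros dth x i j H.
  assert (Hq : Sm (fun t => dot (dth t) (dth t))) by (apply Sm_dot; auto).
  assert (Hh : Sm (fun t => ent (hat (dth t)) i j)) by (apply SmM_hat; auto).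
  assert (Hh2 : Sm (fun t => ent (mmul (hat (dth t)) (hat (dth t))) i j)) by (apply SmM_mmul; apply SmM_hat; auto).
  apply Sm_plus. apply Sm_plus. apply Sm_const.
  apply Sm_mult. apply (Sm_comp sF (fun t => x * x * dot (dth t) (dth t))). apply Sm_sF. apply Sm_mult; auto; apply Sm_const.
  apply Sm_mult; auto; apply Sm_const.
  apply Sm_mult. apply (Sm_comp cF (fun t => x * x * dot (dth t) (dth t))). apply Sm_cF. apply Sm_mult; auto; apply Sm_const.
  apply Sm_mult; auto; apply Sm_const.
Qed.

Lemma SmM_Evar : forall dth x, SmV dth -> SmM (Evar dth x).
Proof.
  intros dth x H i j. eapply Sm_ext. { intros t; symmetry; apply rod_E. } apply Sm_rodform; auto.
Qed.

Lemma ExM_E : forall T dth, SmV dth -> ExM T (Evar dth) (fun _ => mI) (fun t => hat (dth t)).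
Proof.
  intros T dth H i j.
  assert (Hq : Sm (fun t => dot (dth t) (dth t))) by (apply Sm_dot; auto).
  assert (Hh : Sm (fun t => ent (hat (dth t)) i j)) by (apply SmM_hat; auto).
  assert (Hh2 : Sm (fun t => ent (mmul (hat (dth t)) (hat (dth t))) i j)) by (apply SmM_mmul; apply SmM_hat; auto).
  eapply (Ex2_eq T (fun x t => ent mI i j + sF (x * x * dot (dth t) (dth t)) * (x * ent (hat (dth t)) i j)
  + cF (x * x * dot (dth t) (dth t)) * (x * x * ent (mmul (hat (dth t)) (hat (dth t))) i j))).
  apply Ex2_plus. apply Ex2_plus.
  - apply (Ex2_cst T (fun _ => ent mI i j)). apply bnd_Sm, Sm_const.
  - apply Ex2_mult. apply (Ex2_PS T sF (fun t => dot (dth t) (dth t))); auto. apply Sm_sF.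
    apply (Ex2_i1 T (fun t => ent (hat (dth t)) i j)). apply bnd_Sm; auto.
  - apply Ex2_ub_mul. apply (UB_PS T cF (fun t => dot (dth t) (dth t))); auto. apply Sm_cF.
    apply (Ex2_i2 T (fun t => ent (mmul (hat (dth t)) (hat (dth t))) i j)). apply bnd_Sm; auto.
  - intros; simpl. symmetry. apply rod_E.
  - intros; simpl. rewrite sF0. ring.
  - intros; simpl. rewrite sF0. ring.
Qed.

Lemma ent_dEvar : forall dth x t i j, SmV dth ->
  ent (mderiv (Evar dth x) t) i j =
  Derive sF (x*x*dot (dth t) (dth t)) * ((x*x*Derive (fun s => dot (dth s) (dth s)) t) * (x * ent (hat (dth t)) i j))
  + sF (x*x*dot (dth t) (dth t)) * (x * Derive (fun s => ent (hat (dth s)) i j) t) +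
  (Derive cF (x*x*dot (dth t) (dth t)) * ((x*x*Derive (fun s => dot (dth s) (dth s)) t) * (x*x*ent (mmul (hat (dth t)) (hat (dth t))) i j))
   + cF (x*x*dot (dth t) (dth t)) * (x*x*Derive (fun s => ent (mmul (hat (dth s)) (hat (dth s))) i j) t)).
Proof.
  intros dth x t i j H. rewrite ent_mderiv.
  rewrite (Derive_ext _ (fun u => ent mI i j + sF (x*x*(fun s => dot (dth s) (dth s)) u) * (x * (fun s => ent (hat (dth s)) i j) u)
       + cF (x*x*(fun s => dot (dth s) (dth s)) u) * (x*x*(fun s => ent (mmul (hat (dth s)) (hat (dth s))) i j) u))).
  2:{ intros; apply rod_E. }
  rewrite Derive_rod. reflexivity.
  apply Sm_sF. apply Sm_cF. apply Sm_dot; auto. apply SmM_hat; auto. apply SmM_mmul; apply SmM_hat; auto.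
Qed.

Lemma ExM_dE : forall T dth, SmV dth ->
  ExM T (fun x t => mderiv (Evar dth x) t) (fun _ => mzero) (fun t => mderiv (fun s => hat (dth s)) t).
Proof.
  intros T dth H i j.
  assert (Hq : Sm (fun t => dot (dth t) (dth t))) by (apply Sm_dot; auto).
  assert (Hh : Sm (fun t => ent (hat (dth t)) i j)) by (apply SmM_hat; auto).
  assert (Hh2 : Sm (fun t => ent (mmul (hat (dth t)) (hat (dth t))) i j)) by (apply SmM_mmul; apply SmM_hat; auto).
  eapply Ex2_eq.
  2:{ intros; symmetry; apply ent_dEvar; auto. }
  apply Ex2_plus. apply Ex2_plus.
  - apply Ex2_ub_mul. apply (UB_PS T (Derive sF) (fun t => dot (dth t) (dth t))); auto. apply Sm_Derive, Sm_sF.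
    eapply Ex2_zero_mult. apply (Ex2_i2 T (fun t => Derive (fun s => dot (dth s) (dth s)) t)). apply bnd_Sm, Sm_Derive; auto.
    apply (Ex2_i1 T (fun t => ent (hat (dth t)) i j)). apply bnd_Sm; auto.
  - apply Ex2_mult. apply (Ex2_PS T sF (fun t => dot (dth t) (dth t))); auto. apply Sm_sF.
    apply (Ex2_i1 T (fun t => Derive (fun s => ent (hat (dth s)) i j) t)). apply bnd_Sm, Sm_Derive; auto.
  - apply Ex2_plus.
    + apply Ex2_ub_mul. apply (UB_PS T (Derive cF) (fun t => dot (dth t) (dth t))); auto. apply Sm_Derive, Sm_cF.
      eapply Ex2_zero_mult. apply (Ex2_i2 T (fun t => Derive (fun s => dot (dth s) (dth s)) t)). apply bnd_Sm, Sm_Derive; auto.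
      apply (Ex2_i2 T (fun t => ent (mmul (hat (dth t)) (hat (dth t))) i j)). apply bnd_Sm; auto.
    + apply Ex2_ub_mul. apply (UB_PS T cF (fun t => dot (dth t) (dth t))); auto. apply Sm_cF.
      apply (Ex2_i2 T (fun t => Derive (fun s => ent (mmul (hat (dth s)) (hat (dth s))) i j) t)). apply bnd_Sm, Sm_Derive; auto.
  - intros; simpl. rewrite ent_mzero. ring.
  - intros; simpl. rewrite sF0, ent_mderiv. ring.
Qed.

Ltac dM A := let a := fresh "a" in destruct A as [[a ?a ?a] [?a ?a ?a] [?a ?a ?a]].
Ltac dV v := destruct v as [?x ?y ?z].

Lemma mmul_assoc : forall A B C, mmul A (mmul B C) = mmul (mmul A B) C.
Proof. intros. mext; ring. Qed.
Lemma mmul_mI_l : forall A, mmul mI A = A.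
Proof. intros. dM A. mext; ring. Qed.
Lemma adj_right : forall A, mmul A (madj A) = mscale (mdet A) mI.
Proof. intros. dM A. mext; unfold mdet, dot, cross; simpl; ring. Qed.
Lemma SO3_adj : forall A, mmul (mtr A) A = mI -> mdet A = 1 -> madj A = mtr A.
Proof.
  intros A H1 H2.
  assert (E : mmul A (madj A) = mI). { rewrite adj_right, H2. apply mscale_1. }
  transitivity (mmul (mmul (mtr A) A) (madj A)).
  - rewrite H1. symmetry; apply mmul_mI_l.
  - rewrite <- mmul_assoc, E. apply mmul_mI_r.
Qed.
Lemma SO3_right : forall A, mmul (mtr A) A = mI -> mdet A = 1 -> mmul A (mtr A) = mI.
Proof. intros A H1 H2. rewrite <- (SO3_adj A H1 H2), adj_right, H2. apply mscale_1. Qed.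
Lemma vee_conj : forall A a, vee (mmul (mtr A) (mmul (hat a) A)) = mapp (madj A) a.
Proof. intros. dM A. dV a. unfold vee, madj, mapp, dot, cross; simpl. f_equal; ring. Qed.
Lemma dot_sym_J : forall J x y, mtr J = J -> dot x (mapp J y) = dot y (mapp J x).
Proof.
  intros J x y H. dM J. dV x. dV y. unfold mtr, mmk in H. simpl in H. injection H; intros.
  unfold mapp, dot; simpl. subst. ring.
Qed.
Lemma dot_mapp_tr : forall A x y, dot (mapp (mtr A) x) y = dot x (mapp A y).
Proof. intros. dM A. dV x. dV y. unfold mapp, dot; simpl; ring. Qed.
Lemma dot_comm : forall x y, dot x y = dot y x.
Proof. intros. unfold dot; ring. Qed.
Lemma hat_vee_skew : forall S, madd S (mtr S) = mzero -> hat (vee S) = S.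
Proof.
  intros S H. dM S. unfold madd, mtr, mzero, mmk in H; simpl in H. injection H; intros.
  mext; lra.
Qed.
Lemma mapp_mmul : forall A B x, mapp (mmul A B) x = mapp A (mapp B x).
Proof. intros. dM A. dM B. dV x. unfold mapp, dot; simpl. f_equal; ring. Qed.

Lemma alg_b : forall A Ad J vd, mmul (mtr A) A = mI -> mdet A = 1 -> mtr J = J ->
  madd (mmul Ad (mtr A)) (mtr (mmul Ad (mtr A))) = mzero ->
  / 2 * (dot (vee (mmul (mtr A) Ad)) (mapp J (vee (mmul (mtr A) (mmul (hat vd) A))))
        + dot (vee (mmul (mtr A) (mmul (hat vd) A))) (mapp J (vee (mmul (mtr A) Ad))))
  = dot (mapp (mmul A (mmul J (mtr A))) (vee (mmul Ad (mtr A)))) vd.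
Proof.
  intros A Ad J vd HO Hd HJ HS.
  rewrite !vee_conj, (SO3_adj A HO Hd).
  set (W0 := vee (mmul (mtr A) Ad)).
  rewrite (dot_sym_J J W0 (mapp (mtr A) vd) HJ).
  replace (/ 2 * (dot (mapp (mtr A) vd) (mapp J W0) + dot (mapp (mtr A) vd) (mapp J W0))) with
    (dot (mapp (mtr A) vd) (mapp J W0)) by field.
  rewrite dot_mapp_tr, !mapp_mmul.
  assert (Hw : mapp (mtr A) (vee (mmul Ad (mtr A))) = W0).
  { rewrite <- (SO3_adj A HO Hd) at 1. rewrite <- vee_conj, hat_vee_skew by auto.
    unfold W0. f_equal. rewrite <- !mmul_assoc, HO, mmul_mI_r. reflexivity. }
  rewrite Hw. apply dot_comm.
Qed.

Ltac toR := match goal with |- ?a = ?b => change (@eq R a b) end.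

Lemma near_interior : forall T t0 d, 0 < T -> 0 <= t0 <= T -> 0 < d ->
  exists s, 0 < s < T /\ Rabs (s - t0) < d /\ s <> t0.
Proof.
  intros T t0 d HT Ht Hd. set (m := Rmin d (T / 2)).
  assert (Hm : 0 < m) by (apply Rmin_pos; lra).
  assert (Hm1 : m <= d) by apply Rmin_l. assert (Hm2 : m <= T / 2) by apply Rmin_r.
  destruct (Rle_dec t0 (T / 2)).
  - exists (t0 + m / 2). split. lra. split. replace (t0 + m / 2 - t0) with (m / 2) by ring.
    rewrite Rabs_right; lra. lra.
  - exists (t0 - m / 2). split. lra. split. replace (t0 - m / 2 - t0) with (- (m / 2)) by ring.
    rewrite Rabs_Ropp, Rabs_right; lra. lra.
Qed.

Lemma deriv_const_zero : forall T f t0, 0 < T -> 0 <= t0 <= T -> ex_derive f t0 ->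
  (forall s, 0 <= s <= T -> f s = f t0) -> Derive f t0 = 0.
Proof.
  intros T f t0 HT Ht Hd Hc. pose proof (Derive_correct _ _ Hd) as D.
  apply is_derive_Reals in D. set (l := Derive f t0) in *.
  destruct (Req_dec l 0) as [E|E]; auto. exfalso.
  assert (Hl : 0 < Rabs l) by (apply Rabs_pos_lt; auto).
  destruct (D (Rabs l) Hl) as [d Hd'].
  destruct (near_interior T t0 d HT Ht (cond_pos d)) as [s [Hs1 [Hs2 Hs3]]].
  specialize (Hd' (s - t0) ltac:(lra) Hs2). replace (t0 + (s - t0)) with s in Hd' by ring.
  rewrite Hc in Hd' by lra. replace ((f t0 - f t0) / (s - t0) - l) with (- l) in Hd' by (field; lra).
  rewrite Rabs_Ropp in Hd'. lra.
Qed.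

Lemma Derive_eq_on : forall T f g t0, 0 < T -> 0 <= t0 <= T -> ex_derive f t0 -> ex_derive g t0 ->
  (forall s, 0 <= s <= T -> f s = g s) -> Derive f t0 = Derive g t0.
Proof.
  intros T f g t0 HT Ht Hf Hg H.
  assert (E : Derive (fun s => f s - g s) t0 = 0).
  { apply (deriv_const_zero T); auto. apply (ex_derive_minus f g); auto.
    intros s Hs. toR. rewrite !H by auto. ring. }
  rewrite (Derive_minus f g) in E by auto. lra.
Qed.

Lemma cont_zero_ext : forall T f t0, 0 < T -> 0 <= t0 <= T -> continuity_pt f t0 ->
  (forall s, 0 < s < T -> f s = 0) -> f t0 = 0.
Proof.
  intros T f t0 HT Ht Hc H. destruct (Req_dec (f t0) 0) as [E|E]; auto. exfalso.
  assert (Hl : 0 < Rabs (f t0)) by (apply Rabs_pos_lt; auto).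
  destruct (Hc (Rabs (f t0)) Hl) as [d [Hd Hd']].
  destruct (near_interior T t0 d HT Ht Hd) as [s [Hs1 [Hs2 Hs3]]].
  specialize (Hd' s). simpl in Hd'. unfold R_dist in Hd'. rewrite H in Hd' by auto.
  rewrite Rminus_0_l, Rabs_Ropp in Hd'. assert (Rabs (f t0) < Rabs (f t0)). apply Hd'.
  split. unfold D_x, no_cond; auto. auto. lra.
Qed.

Lemma ex_RInt_Sm : forall f a b, Sm f -> ex_RInt f a b.
Proof.
  intros f a b H. apply (ex_RInt_continuous (V:=R_CompleteNormedModule)). intros z _.
  apply (ex_derive_continuous (K:=R_AbsRing) (V:=R_NormedModule)). apply Sm_ex_derive; auto.
Qed.

Lemma cont_on_Sm : forall T f, Sm f -> cont_on 0 T f.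
Proof.
  intros T f H t Ht eps Heps. destruct (Sm_continuous f t H eps Heps) as [d [Hd Hd']].
  exists d. split; auto. intros s Hs Hst.
  destruct (Req_dec s t) as [E|E]. subst. rewrite Rminus_diag, Rabs_R0; auto.
  apply Hd'. split. split; [exact I| auto]. simpl; unfold R_dist; auto.
Qed.

Lemma int_zero : forall T h, 0 < T -> Sm h -> (forall t, 0 <= t <= T -> 0 <= h t) ->
  RInt h 0 T = 0 -> forall t, 0 < t < T -> h t = 0.
Proof.
  intros T h HT Hs Hp HI t0 Ht0. destruct (Req_dec (h t0) 0) as [E|E]; auto. exfalso.
  assert (Hpos : 0 < h t0). { pose proof (Hp t0 ltac:(lra)). lra. }
  destruct (Sm_continuous h t0 Hs (h t0 / 2) ltac:(lra)) as [d [Hd Hd']].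
  set (a := Rmax 0 (t0 - d / 2)). set (b := Rmin T (t0 + d / 2)).
  assert (Ha : 0 <= a < t0). { unfold a. split. apply Rmax_l. apply Rmax_lub_lt; lra. }
  assert (Hb : t0 < b <= T). { unfold b. split. apply Rmin_glb_lt; lra. apply Rmin_l. }
  assert (Ha2 : t0 - d / 2 <= a) by apply Rmax_r. assert (Hb2 : b <= t0 + d / 2) by apply Rmin_r.
  assert (Ih : forall u v, ex_RInt h u v) by (intros; apply ex_RInt_Sm; auto).
  rewrite <- (RInt_Chasles h 0 a T), <- (RInt_Chasles h a b T) in HI; auto.
  change plus with Rplus in HI.
  assert (I1 : 0 <= RInt h 0 a).
  { apply RInt_ge_0. lra. auto. intros x Hx. apply Hp. lra. }
  assert (I3 : 0 <= RInt h b T).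
  { apply RInt_ge_0. lra. auto. intros x Hx. apply Hp. lra. }
  assert (I2 : RInt (fun _ => h t0 / 2) a b <= RInt h a b).
  { apply RInt_le. lra. apply ex_RInt_const. auto. intros x Hx.
    destruct (Req_dec x t0) as [Ex|Ex]. subst; lra.
    assert (Hx' : Rabs (h x - h t0) < h t0 / 2).
    { apply Hd'. split. split; [exact I | intro; apply Ex; auto]. simpl; unfold R_dist.
      apply Rabs_def1; lra. }
    apply Rabs_def2 in Hx'. lra. }
  rewrite RInt_const in I2. change (scal (b - a) (h t0 / 2)) with ((b - a) * (h t0 / 2)) in I2.
  assert (0 < (b - a) * (h t0 / 2)) by (apply Rmult_lt_0_compat; lra).
  lra.
Qed.

Lemma mderiv_hat : forall dth t, mderiv (fun s => hat (dth s)) t = hat (vderiv dth t).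
Proof.
  intros dth t. mext; first [ apply Derive_const | apply Derive_opp | reflexivity ].
Qed.

Lemma mderiv_Lvar : forall L dth x t, SmM L -> SmV dth ->
  mderiv (Lvar L dth x) t = madd (mmul (mderiv (Evar dth x) t) (L t)) (mmul (Evar dth x t) (mderiv L t)).
Proof. intros. exact (mderiv_mmul (Evar dth x) L t (SmM_Evar dth x H0) H). Qed.

Lemma SmM_Lvar : forall L dth x, SmM L -> SmV dth -> SmM (Lvar L dth x).
Proof. intros. exact (SmM_mmul (Evar dth x) L (SmM_Evar dth x H0) H). Qed.

Lemma ExM_Lvar : forall T L dth, SmM L -> SmV dth ->
  ExM T (Lvar L dth) L (fun t => mmul (hat (dth t)) (L t)).
Proof.
  intros T L dth HL Hd. eapply ExM_eq. apply (ExM_mmul T (Evar dth) (fun _ t => L t)). apply ExM_E; auto. apply ExM_cst; auto.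
  - intros; reflexivity.
  - intros; apply mmul_mI_l.
  - intros; cbv beta. mext; ring.
Qed.

Lemma ExM_dLvar : forall T L dth, SmM L -> SmV dth ->
  ExM T (fun x t => mderiv (Lvar L dth x) t) (mderiv L)
    (fun t => madd (mmul (hat (vderiv dth t)) (L t)) (mmul (hat (dth t)) (mderiv L t))).
Proof.
  intros T L dth HL Hd. eapply ExM_eq.
  apply (ExM_madd T (fun x t => mmul (mderiv (Evar dth x) t) (L t)) (fun x t => mmul (Evar dth x t) (mderiv L t))).
  apply (ExM_mmul T (fun x t => mderiv (Evar dth x) t) (fun _ t => L t)). apply ExM_dE; auto. apply ExM_cst; auto.
  apply (ExM_mmul T (Evar dth) (fun _ t => mderiv L t)). apply ExM_E; auto. apply ExM_cst. apply SmM_mderiv; auto.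
  - intros; symmetry; apply mderiv_Lvar; auto.
  - intros; cbv beta. mext; ring.
  - intros; cbv beta. rewrite mderiv_hat. mext; ring.
Qed.

Lemma ExM_Mv : forall T L dth, SmM L -> SmV dth ->
  ExM T (fun x t => mmul (mtr (Lvar L dth x t)) (mderiv (Lvar L dth x) t))
    (fun t => mmul (mtr (L t)) (mderiv L t)) (fun t => mmul (mtr (L t)) (mmul (hat (vderiv dth t)) (L t))).
Proof.
  intros T L dth HL Hd. eapply ExM_eq.
  apply (ExM_mmul T (fun x t => mtr (Lvar L dth x t)) (fun x t => mderiv (Lvar L dth x) t)).
  apply ExM_mtr. apply ExM_Lvar; auto. apply ExM_dLvar; auto.
  - intros; reflexivity.
  - intros; reflexivity.
  - intros; cbv beta. destruct (dth t) as [p q r]. mext; ring.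
Qed.

Lemma Ex2_K : forall T J L dth, SmM L -> SmV dth ->
  Ex2 T (fun x t => kinetic J (Lvar L dth x t) (mderiv (Lvar L dth x) t))
    (fun t => / 2 * dot (vee (mmul (mtr (L t)) (mderiv L t))) (mapp J (vee (mmul (mtr (L t)) (mderiv L t)))))
    (fun t => / 2 * (dot (vee (mmul (mtr (L t)) (mderiv L t))) (mapp J (vee (mmul (mtr (L t)) (mmul (hat (vderiv dth t)) (L t)))))
         + dot (vee (mmul (mtr (L t)) (mmul (hat (vderiv dth t)) (L t)))) (mapp J (vee (mmul (mtr (L t)) (mderiv L t)))))).
Proof.
  intros T J L dth HL Hd.
  eapply (Ex2_eq T (fun x t => / 2 * dot (vee (mmul (mtr (Lvar L dth x t)) (mderiv (Lvar L dth x) t)))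
      (mapp J (vee (mmul (mtr (Lvar L dth x t)) (mderiv (Lvar L dth x) t)))))).
  apply Ex2_scal. apply Ex2_dot.
  { apply ExV_vee. apply ExM_Mv; auto. }
  { apply (ExV_mapp T J (fun x t => vee (mmul (mtr (Lvar L dth x t)) (mderiv (Lvar L dth x) t)))).
    apply ExV_vee. apply ExM_Mv; auto. }
  - intros; reflexivity.
  - intros; reflexivity.
  - intros; reflexivity.
Qed.

Lemma Sm_kin : forall J L dth x, SmM L -> SmV dth ->
  Sm (fun t => kinetic J (Lvar L dth x t) (mderiv (Lvar L dth x) t)).
Proof.
  intros J L dth x HL Hd. unfold kinetic. apply Sm_mult. apply Sm_const.
  apply Sm_dot. apply SmV_vee. apply SmM_mmul. apply SmM_mtr. apply SmM_Lvar; auto. apply SmM_mderiv. apply SmM_Lvar; auto.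
  apply SmV_mapp. apply SmM_const. apply SmV_vee. apply SmM_mmul. apply SmM_mtr. apply SmM_Lvar; auto. apply SmM_mderiv. apply SmM_Lvar; auto.
Qed.

Lemma SmV_pi : forall J L, SmM L -> SmV (pi_sp J L).
Proof.
  intros J L HL. unfold pi_sp, jmat, w_sp. apply SmV_mapp.
  apply SmM_mmul; auto. apply SmM_mmul. apply SmM_const. apply SmM_mtr; auto.
  apply SmV_vee. apply SmM_mmul. apply SmM_mderiv; auto. apply SmM_mtr; auto.
Qed.

Lemma mderiv_mtr : forall L t, mderiv (fun s => mtr (L s)) t = mtr (mderiv L t).
Proof. intros. mext; reflexivity. Qed.

Lemma skew_L : forall T L t, 0 < T -> SmM L -> (forall s, 0 <= s <= T -> in_SO3 (L s)) -> 0 <= t <= T ->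
  madd (mmul (mderiv L t) (mtr (L t))) (mtr (mmul (mderiv L t) (mtr (L t)))) = mzero.
Proof.
  intros T L t HT HL HSO Ht. apply M3_ext. intros i j _ _.
  assert (D : ent (mderiv (fun s => mmul (L s) (mtr (L s))) t) i j = 0).
  { rewrite ent_mderiv. apply (deriv_const_zero T); auto.
    apply Sm_ex_derive. apply (SmM_mmul L (fun s => mtr (L s))); auto. apply SmM_mtr; auto.
    intros s Hs. destruct (HSO s Hs) as [H1 H2]. destruct (HSO t Ht) as [H3 H4].
    rewrite !SO3_right; auto. }
  rewrite (mderiv_mmul L (fun s => mtr (L s)) t HL (SmM_mtr L HL)) in D.
  rewrite mderiv_mtr in D. rewrite ent_madd, !ent_mmul, !ent_mtr in D.
  rewrite ent_mzero, ent_madd, ent_mtr, !ent_mmul, !ent_mtr. lra.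
Qed.

Lemma key_deriv : forall J T L dth, 0 < T -> mtr J = J -> SmM L ->
  (forall t, 0 <= t <= T -> in_SO3 (L t)) -> SmV dth ->
  is_derive (action_var J T L dth) 0 (RInt (fun t => dot (pi_sp J L t) (vderiv dth t)) 0 T).
Proof.
  intros J T L dth HT HJ HL HSO Hd. unfold action_var.
  apply (Ex2_is_derive T (fun x t => kinetic J (Lvar L dth x t) (mderiv (Lvar L dth x) t))
    (fun t => / 2 * dot (vee (mmul (mtr (L t)) (mderiv L t))) (mapp J (vee (mmul (mtr (L t)) (mderiv L t)))))); auto.
  - apply (Ex2_eq T _ _ _ _ _ _ (Ex2_K T J L dth HL Hd)).
    + intros; reflexivity.
    + intros; reflexivity.
    + intros t Ht. destruct (HSO t Ht) as [H1 H2]. cbv beta.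
      unfold pi_sp, jmat, w_sp. apply alg_b; auto. apply (skew_L T); auto.
  - intros x _. apply ex_RInt_Sm. apply Sm_kin; auto.
  - apply ex_RInt_Sm. apply Sm_dot. apply SmV_pi; auto. apply SmV_vderiv; auto.
Qed.

Lemma ibp : forall T P dth, SmV P -> SmV dth -> dth 0 = vzero -> dth T = vzero ->
  RInt (fun t => dot (P t) (vderiv dth t)) 0 T = - RInt (fun t => dot (vderiv P t) (dth t)) 0 T.
Proof.
  intros T P dth HP Hd H0 HT.
  set (f := fun t => vent (P t) 0 * vent (dth t) 0 + vent (P t) 1 * vent (dth t) 1 + vent (P t) 2 * vent (dth t) 2).
  assert (Sf : Sm f) by (unfold f; smt; auto).
  assert (Df : forall t, Derive f t = dot (vderiv P t) (dth t) + dot (P t) (vderiv dth t)).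
  { intros t. unfold f. rewrite Derive_sum3 by (apply Sm_ex_derive; auto).
    rewrite !dot_vent, !vent_vderiv. ring. }
  assert (E : RInt (Derive f) 0 T = f T - f 0).
  { apply RInt_Derive. intros; apply Sm_ex_derive; auto.
    intros; apply (ex_derive_continuous (K:=R_AbsRing) (V:=R_NormedModule)). apply Sm_ex_derive, Sm_Derive; auto. }
  assert (Z : f T - f 0 = 0). { unfold f. rewrite H0, HT. simpl. ring. }
  rewrite Z in E.
  rewrite (RInt_ext (Derive f) (fun t => dot (vderiv P t) (dth t) + dot (P t) (vderiv dth t))) in E.
  2:{ intros; apply Df. }
  rewrite (RInt_plus (fun t => dot (vderiv P t) (dth t)) (fun t => dot (P t) (vderiv dth t))) in E.
  - change plus with Rplus in E. lra.
  - apply ex_RInt_Sm. apply Sm_dot; auto. apply SmV_vderiv; auto.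
  - apply ex_RInt_Sm. apply Sm_dot; auto. apply SmV_vderiv; auto.
Qed.

Lemma dot_mapp_l : forall A u v, dot (mapp A u) v = dot u (mapp (mtr A) v).
Proof. intros. destruct A as [[a1 a2 a3] [a4 a5 a6] [a7 a8 a9]]. destruct u, v. unfold mapp, dot; simpl; ring. Qed.
Lemma mapp_mI : forall x, mapp mI x = x.
Proof. intros [a b c]. unfold mapp, dot; simpl. f_equal; ring. Qed.
Lemma dot_vscale_l : forall c x y, dot (vscale c x) y = c * dot x y.
Proof. intros. unfold dot; simpl; ring. Qed.
Lemma dot_vscale_r : forall c x y, dot x (vscale c y) = c * dot x y.
Proof. intros. unfold dot; simpl; ring. Qed.
Lemma vadd_vscale0 : forall c x, vadd c (vscale 0 x) = c.
Proof. intros [a b e] [p q r]. unfold vadd, vscale; simpl. f_equal; ring. Qed.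
Lemma gg_id : forall p d, dot (vsub p (vscale (dot d p) d)) (vsub p (vscale (dot d p) d)) =
  dot p (vsub p (vscale (dot d p) d)) + (dot d p) ^ 2 * (dot d d - 1).
Proof. intros [a b c] [x y z]. unfold dot; simpl; ring. Qed.
Lemma gd_id : forall p d, dot (vsub p (vscale (dot d p) d)) d = dot d p * (1 - dot d d).
Proof. intros [a b c] [x y z]. unfold dot; simpl; ring. Qed.
Lemma dot_zero_vec : forall g, dot g g = 0 -> g = vzero.
Proof. intros [a b c] H. unfold dot in H; simpl in H. unfold vzero. f_equal; nra. Qed.
Lemma g_zero_dot : forall p c d x, vsub p (vscale c d) = vzero -> dot p x = c * dot x d.
Proof. intros [a b e] c [p q r] [x y z] H. unfold vsub, vscale, vzero in H; simpl in H. injection H; intros.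
  unfold dot; simpl. nra. Qed.

Theorem theorem5 (D1 D2 D3 : V3) (J : M3) (T : R) (L : R -> M3) :
  0 < T ->
  (* {D1,D2,D3} positively oriented orthonormal basis *)
  dot D1 D1 = 1 -> dot D2 D2 = 1 -> dot D3 D3 = 1 ->
  dot D1 D2 = 0 -> dot D1 D3 = 0 -> dot D2 D3 = 0 ->
  mdet (mcols D1 D2 D3) = 1 ->
  (* J symmetric positive definite with eigenvector D3 *)
  mtr J = J ->
  (forall v : V3, v <> vzero -> 0 < dot v (mapp J v)) ->
  (exists lam : R, mapp J D3 = vscale lam D3) ->
  (* L smooth curve [0,T] -> SO(3) *)
  smooth_M L ->
  (forall t, 0 <= t <= T -> in_SO3 (L t)) ->
  ( ( (forall t, 0 <= t <= T -> dot (w_sp L t) (d3 D3 L t) = 0) /\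
      exists mu : R -> R, cont_on 0 T mu /\
        forall dth : R -> V3, smooth_V dth -> dth 0 = vzero -> dth T = vzero ->
          exists dA : R,
            is_derive (action_var J T L dth) 0 dA /\
            dA + RInt (fun t => mu t * dot (dth t) (d3 D3 L t)) 0 T = 0 )
    <->
    (exists mu : R -> R, forall t, 0 <= t <= T -> sys_ii J D3 L mu t) )
  /\
  (forall mu : R -> R,
     (forall t, 0 <= t <= T -> sys_ii J D3 L mu t) <->
     (forall t, 0 <= t <= T -> sys_pt J D3 L mu t)).
Proof.
  intros HT HD11 HD22 HD33 HD12 HD13 HD23 Hdet HJ Hpd [lam Hlam] HLs HSO.
  pose proof (smooth_M_SmM L HLs) as HL.
  assert (Spi : SmV (pi_sp J L)) by (apply SmV_pi; auto).
  assert (Sd3 : SmV (d3 D3 L)) by (unfold d3; apply SmV_mapp; auto; apply SmV_const).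
  assert (Spar : Sm (pi_par J D3 L)) by (unfold pi_par; apply Sm_dot; auto).
  assert (Sperp : SmV (pi_perp J D3 L)) by (unfold pi_perp; apply SmV_vsub; auto; apply SmV_vscale; auto).
  assert (Sdpi : SmV (vderiv (pi_sp J L))) by (apply SmV_vderiv; auto).
  assert (Funit : forall t, 0 <= t <= T -> dot (d3 D3 L t) (d3 D3 L t) = 1).
  { intros t Ht. destruct (HSO t Ht) as [HO _]. unfold d3.
    rewrite dot_mapp_l, <- mapp_mmul, HO, mapp_mI. exact HD33. }
  assert (Fpar : forall t, 0 <= t <= T -> pi_par J D3 L t = lam * dot (w_sp L t) (d3 D3 L t)).
  { intros t Ht. destruct (HSO t Ht) as [HO _]. unfold pi_par, pi_sp, jmat, d3.
    rewrite !mapp_mmul, dot_mapp_l, <- (mapp_mmul (mtr (L t)) (L t)), HO, mapp_mI.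
    rewrite dot_comm, (dot_sym_J J D3 _ HJ), Hlam, dot_vscale_r, dot_mapp_tr. reflexivity. }
  assert (FW : (forall t, 0 <= t <= T -> dot (w_sp L t) (d3 D3 L t) = 0) ->
     (forall t, 0 <= t <= T -> pi_par J D3 L t = 0) /\
     (forall t, 0 <= t <= T -> Derive (pi_par J D3 L) t = 0) /\
     (forall t, 0 <= t <= T -> vderiv (pi_perp J D3 L) t = vderiv (pi_sp J L) t)).
  { intros Hw. assert (P0 : forall t, 0 <= t <= T -> pi_par J D3 L t = 0).
    { intros t Ht. rewrite Fpar, Hw; auto. toR; ring. }
    split; auto. split.
    - intros t Ht. apply (deriv_const_zero T); auto. apply Sm_ex_derive; auto.
      intros s Hs. rewrite !P0; auto.
    - intros t Ht. apply V3_ext. intros i _. rewrite !vent_vderiv.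
      apply (Derive_eq_on T); auto; try (apply Sm_ex_derive; auto).
      intros s Hs. unfold pi_perp. rewrite vent_vsub, vent_vscale, P0; auto. toR; ring. }
  set (g := fun t => vsub (vderiv (pi_sp J L) t) (vscale (dot (d3 D3 L t) (vderiv (pi_sp J L) t)) (d3 D3 L t))).
  assert (Sg : SmV g) by (unfold g; apply SmV_vsub; auto; apply SmV_vscale; auto; apply Sm_dot; auto).
  assert (Fcov : (forall t, 0 <= t <= T -> dot (w_sp L t) (d3 D3 L t) = 0) ->
     forall t, 0 <= t <= T -> cov_d3 D3 L (pi_perp J D3 L) t = g t).
  { intros Hw t Ht. unfold cov_d3, g. rewrite (proj2 (proj2 (FW Hw)) t Ht). reflexivity. }
  split.
  - split.
    + intros [Hw [mu [Hmu Hvar]]].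
      destruct (FW Hw) as [P0 [DP0 Dperp]].
      assert (G0 : forall t, 0 <= t <= T -> g t = vzero).
      { set (dth := fun t => vscale (t * (T - t)) (g t)).
        assert (Sphi : Sm (fun t => t * (T - t))) by (apply Sm_mult; [apply Sm_id | apply Sm_minus; [apply Sm_const | apply Sm_id]]).
        assert (Sdth : SmV dth) by (unfold dth; apply SmV_vscale; auto).
        assert (dth0 : dth 0 = vzero) by (unfold dth; vext; ring).
        assert (dthT : dth T = vzero) by (unfold dth; vext; ring).
        destruct (Hvar dth (SmV_smooth_V _ Sdth) dth0 dthT) as [dA [HdA Heq]].
        pose proof (key_deriv J T L dth HT HJ HL HSO Sdth) as HK.
        assert (EdA : dA = RInt (fun t => dot (pi_sp J L t) (vderiv dth t)) 0 T).
        { apply is_derive_unique in HdA. apply is_derive_unique in HK. congruence. }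
        rewrite (ibp T (pi_sp J L) dth) in EdA; auto.
        assert (Emu : RInt (fun t => mu t * dot (dth t) (d3 D3 L t)) 0 T = 0).
        { rewrite (RInt_ext _ (fun _ => 0)).
          - rewrite RInt_const. change (scal (T - 0) 0) with ((T - 0) * 0). toR; ring.
          - intros t Ht. rewrite Rmin_left, Rmax_right in Ht by lra. unfold dth, g.
            rewrite dot_vscale_l, gd_id, Funit by lra. toR; ring. }
        rewrite Emu, EdA in Heq.
        assert (I0 : RInt (fun t => t * (T - t) * dot (g t) (g t)) 0 T = 0).
        { rewrite <- (RInt_ext (fun t => dot (vderiv (pi_sp J L) t) (dth t))). lra.
          intros t Ht. rewrite Rmin_left, Rmax_right in Ht by lra. unfold dth, g.
          rewrite dot_vscale_r, gg_id, Funit by lra. toR; ring. }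
        assert (Z : forall t, 0 < t < T -> g t = vzero).
        { intros t Ht.
          assert (Hz := int_zero T (fun t => t * (T - t) * dot (g t) (g t)) HT).
          assert (Hz' : t * (T - t) * dot (g t) (g t) = 0).
          { apply Hz; auto.
            - apply Sm_mult; auto. apply Sm_dot; auto.
            - intros s Hs. apply Rmult_le_pos. nra. destruct (g s); unfold dot; simpl; nra. }
          apply dot_zero_vec. assert (0 < t * (T - t)) by nra.
          apply Rmult_integral in Hz'. destruct Hz'; auto. lra. }
        intros t Ht. apply V3_ext. intros i _. transitivity 0.
        - apply (cont_zero_ext T (fun s => vent (g s) i) t); auto. apply Sm_continuous; auto.
          intros s Hs. rewrite Z; auto. destruct i as [|[|[|i]]]; reflexivity.
        - destruct i as [|[|[|i]]]; reflexivity. }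
      exists (fun t => - dot (pi_perp J D3 L t) (vderiv (d3 D3 L) t)). intros t Ht. unfold sys_ii. split; [|split].
      * rewrite Fcov, G0, P0; auto. apply vadd_vscale0.
      * rewrite DP0; auto. toR; ring.
      * apply Hw; auto.
    + intros [mu Hsys].
      assert (Hw : forall t, 0 <= t <= T -> dot (w_sp L t) (d3 D3 L t) = 0).
      { intros t Ht. destruct (Hsys t Ht) as [_ [_ H]]. exact H. }
      destruct (FW Hw) as [P0 [DP0 Dperp]].
      assert (G0 : forall t, 0 <= t <= T -> g t = vzero).
      { intros t Ht. destruct (Hsys t Ht) as [H1 _]. rewrite Fcov, P0, vadd_vscale0 in H1; auto. }
      split; auto.
      exists (fun t => dot (d3 D3 L t) (vderiv (pi_sp J L) t)). split.
      { apply cont_on_Sm. apply Sm_dot; auto. }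
      intros dth Hsm H0 HT0. pose proof (smooth_V_SmV dth Hsm) as Sdth.
      exists (RInt (fun t => dot (pi_sp J L t) (vderiv dth t)) 0 T). split.
      { apply key_deriv; auto. }
      rewrite (ibp T (pi_sp J L) dth); auto.
      rewrite (RInt_ext (fun t => dot (d3 D3 L t) (vderiv (pi_sp J L) t) * dot (dth t) (d3 D3 L t))
                        (fun t => dot (vderiv (pi_sp J L) t) (dth t))). toR; ring.
      intros t Ht. rewrite Rmin_left, Rmax_right in Ht by lra. specialize (G0 t ltac:(lra)).
      unfold g in G0. rewrite (g_zero_dot _ _ _ (dth t) G0). reflexivity.
  - intros mu. split; intros Hs t Ht.
    + assert (Hw : forall s, 0 <= s <= T -> dot (w_sp L s) (d3 D3 L s) = 0).
      { intros s Hs'. destruct (Hs s Hs') as [_ [_ H]]. exact H. }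
      destruct (FW Hw) as [P0 [DP0 _]]. destruct (Hs t Ht) as [H1 [H2 H3]].
      unfold sys_pt. split; [|split].
      * rewrite P0, vadd_vscale0 in H1; auto.
      * rewrite DP0 in H2; auto. lra.
      * unfold w_par. exact H3.
    + assert (Hw : forall s, 0 <= s <= T -> dot (w_sp L s) (d3 D3 L s) = 0).
      { intros s Hs'. destruct (Hs s Hs') as [_ [_ H]]. exact H. }
      destruct (FW Hw) as [P0 [DP0 _]]. destruct (Hs t Ht) as [H1 [H2 H3]].
      unfold sys_ii. split; [|split].
      * rewrite P0, vadd_vscale0; auto.
      * rewrite DP0; auto. lra.
      * exact H3.
Qed.
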